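(* Let $\phi$ solve $\widetilde\Box_g\phi=F$, where $g$ is a metric such that $H^{\alpha\beta}=g^{\alpha\beta}-m^{\alpha\beta}$ satisfies $|H^{L\underline L}|<\frac14$. Then at points with $r>0$, $$\Big|\Big(4\partial_s-\frac{H_{LL}}{2g^{L\underline L}}\partial_q-\frac{\overline{\mathrm{tr}}\,H+H_{L\underline L}}{2g^{L\underline L}\,r}\Big)\partial_q(r\phi)+\frac{rF}{2g^{L\underline L}}\Big|\lesssim r|\Delta_\omega\phi|+|H|_{L\mathcal T}\big(r|\bar\partial\partial\phi|+|\partial\phi|\big)+|H|\big(r|\bar\partial^2\phi|+|\bar\partial\phi|+r^{-1}|\phi|\big),$$ where $\Delta_\omega=\delta^{ij}\bar\partial_i\bar\partial_j$.
   Context: Coordinates $(t,x)$, $r=|x|$, $\omega=x/r$; $m$ Minkowski metric; indices raised/lowered with $m$, $g^{\alpha\beta}$ the inverse of $g_{\alpha\beta}$; $\widetilde\Box_g=g^{\alpha\beta}\partial_\alpha\partial_\beta$. $\partial_s=\frac12(\partial_t+\partial_r)$, $\partial_q=\frac12(\partial_r-\partial_t)$. Null frame $L=\partial_t+\partial_r$, $\underline L=\partial_t-\partial_r$, $S_1,S_2$ orthonormal tangent to spheres, $\mathcal T=\{L,S_1,S_2\}$. Lower-index frame components: $H_{XY}=m_{\alpha\mu}m_{\beta\nu}H^{\mu\nu}X^\alpha Y^\beta$. Upper frame components $\pi^{UV}$ of a tensor $\pi^{\alpha\beta}$ are defined by $\pi^{\alpha\beta}=\sum_{U,V\in\{L,\underline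 L,S_1,S_2\}}\pi^{UV}U^\alpha V^\beta$; in particular $\pi^{L\underline L}=\frac14\pi_{\underline LL}$ (so $m^{L\underline L}=-1/2$ and $g^{L\underline L}=-\frac12+H^{L\underline L}$). $\overline{\mathrm{tr}}\,H=H_{S_1S_1}+H_{S_2S_2}$; $|H|_{L\mathcal T}=\sum_{T\in\mathcal T}|H_{LT}|$; $|H|$ sum of absolute values of components. Tangential derivatives $\bar\partial_0=\partial_t+\partial_r$, $\bar\partial_i=\partial_i-\omega_i\omega^j\partial_j$; $|\bar\partial\phi|=\sum|\bar\partial_\alpha\phi|$, $|\bar\partial\partial\phi|=\sum|\bar\partial_\alpha\partial_\beta\phi|$, $|\bar\partial^2\phi|^2=\sum|\bar\partial_\alpha\bar\partial_\beta\phi|^2$. $\lesssim$ is up to an absolute constant. *)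

(* Defs.v *)
From Stdlib Require Import Reals.
From Coquelicot Require Import Coquelicot.
Open Scope R_scope.

(* Points of R^{1+3}: (t, x1, x2, x3). Index 0 = t, indices 1,2,3 = space. *)
Definition pt : Type := (R * R * R * R)%type.

Definition coord (p : pt) (i : nat) : R :=
  match p with (t, x1, x2, x3) =>
    match i with 0%nat => t | 1%nat => x1 | 2%nat => x2 | _ => x3 end end.

Definition upd (p : pt) (i : nat) (h : R) : pt :=
  match p with (t, x1, x2, x3) =>
    match i with
    | 0%nat => (h, x1, x2, x3) | 1%nat => (t, h, x2, x3)
    | 2%nat => (t, x1, h, x3) | _ => (t, x1, x2, h) end end.

Definition sum4 (f : nat -> R) : R := f 0%nat + f 1%nat + f 2%nat + f 3%nat.
Definition sum3 (f : nat -> R) : R := f 1%nat + f 2%nat + f 3%nat.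

Definition pd (i : nat) (u : pt -> R) (p : pt) : R :=
  Derive (fun h => u (upd p i h)) (coord p i).

Definition C2 (phi : pt -> R) : Prop :=
  (forall i p, (i < 4)%nat -> ex_derive (fun h => phi (upd p i h)) (coord p i)) /\
  (forall i j p, (i < 4)%nat -> (j < 4)%nat ->
       ex_derive (fun h => pd j phi (upd p i h)) (coord p i)) /\
  (forall i j p, (i < 4)%nat -> (j < 4)%nat -> continuous (pd i (pd j phi)) p).

Definition rad (p : pt) : R := sqrt (sum3 (fun i => coord p i ^ 2)).
Definition om (p : pt) (i : nat) : R := coord p i / rad p.

Definition dr (u : pt -> R) (p : pt) : R := sum3 (fun j => om p j * pd j u p).
Definition ds (u : pt -> R) (p : pt) : R := (pd 0 u p + dr u p) / 2.
Definition dq (u : pt -> R) (p : pt) : R := (dr u p - pd 0 u p) / 2.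

Definition tb (a : nat) (u : pt -> R) (p : pt) : R :=
  match a with
  | 0%nat => pd 0 u p + dr u p
  | _ => pd a u p - om p a * dr u p
  end.

(* Minkowski metric m = diag(-1,1,1,1) (same matrix for upper/lower indices) *)
Definition mink (a b : nat) : R :=
  if Nat.eqb a b then (if Nat.eqb a 0 then -1 else 1) else 0.

Definition Lv (p : pt) (a : nat) : R := match a with 0%nat => 1 | _ => om p a end.
Definition Lbv (p : pt) (a : nat) : R := match a with 0%nat => 1 | _ => - om p a end.

Definition lowc (Hup : nat -> nat -> R) (X Y : nat -> R) : R :=
  sum4 (fun a => sum4 (fun b => sum4 (fun mu => sum4 (fun nu =>
    mink a mu * mink b nu * Hup mu nu * X a * Y b)))).

Definition sphere_frame (p : pt) (S1 S2 : nat -> R) : Prop :=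
  S1 0%nat = 0 /\ S2 0%nat = 0 /\
  sum3 (fun i => S1 i * S1 i) = 1 /\ sum3 (fun i => S2 i * S2 i) = 1 /\
  sum3 (fun i => S1 i * S2 i) = 0 /\
  sum3 (fun i => S1 i * om p i) = 0 /\ sum3 (fun i => S2 i * om p i) = 0.

(* Main.v *)
Require Import Defs.
From Stdlib Require Import Reals Lra Lia.
From Coquelicot Require Import Coquelicot.
Open Scope R_scope.

Definition ld (a : nat) (u : pt -> R) (p : pt) (l : R) : Prop :=
  is_derive (fun h => u (upd p a h)) (coord p a) l.

Lemma ld_pd a u p l : ld a u p l -> pd a u p = l.
Proof. intro H; unfold pd; now apply is_derive_unique. Qed.

Lemma ld_plus a u v p l1 l2 : ld a u p l1 -> ld a v p l2 ->
  ld a (fun x => u x + v x) p (l1 + l2).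
Proof. intros H1 H2; exact (is_derive_plus _ _ _ _ _ H1 H2). Qed.

Lemma ld_minus a u v p l1 l2 : ld a u p l1 -> ld a v p l2 ->
  ld a (fun x => u x - v x) p (l1 - l2).
Proof. intros H1 H2; exact (is_derive_minus _ _ _ _ _ H1 H2). Qed.

Lemma ld_mult a u v p l1 l2 : ld a u p l1 -> ld a v p l2 ->
  ld a (fun x => u x * v x) p (l1 * v p + u p * l2).
Proof.
  intros H1 H2.
  assert (E : upd p a (coord p a) = p).
  { destruct p as [[[t x1] x2] x3]; destruct a as [|[|[|[|a]]]]; reflexivity. }
  pose proof (is_derive_mult _ _ _ _ _ H1 H2 ltac:(intros; apply Rmult_comm)) as H.
  unfold ld. replace (l1 * v p + u p * l2) with
    (plus (mult l1 (v (upd p a (coord p a)))) (mult (u (upd p a (coord p a))) l2))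
    by (rewrite E; reflexivity). exact H.
Qed.

Lemma ld_scal a u p k l : ld a u p l -> ld a (fun x => k * u x) p (k * l).
Proof. intro H; exact (is_derive_scal _ _ _ _ H). Qed.

Lemma ld_div2 a u p l : ld a u p l -> ld a (fun x => u x / 2) p (l / 2).
Proof. intro H. unfold ld.
  replace (l/2) with (/2 * l) by (unfold Rdiv; ring).
  apply (is_derive_ext (fun h => /2 * u (upd p a h))).
  - intro t; change (/2 * u (upd p a t) = u (upd p a t) / 2); field.
  - now apply is_derive_scal. Qed.

Lemma ld_sum3 a (u : nat -> pt -> R) p (l : nat -> R) :
  (forall j, ld a (u j) p (l j)) -> ld a (fun x => sum3 (fun j => u j x)) p (sum3 l).
Proof. intro H; unfold sum3.
  apply (ld_plus a (fun x => u 1%nat x + u 2%nat x) (u 3%nat)); [|apply H].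
  apply ld_plus; apply H. Qed.

Lemma ld_ext a u v p l : (forall x, u x = v x) -> ld a u p l -> ld a v p l.
Proof. intros E H; unfold ld; apply is_derive_ext with (fun h => u (upd p a h)); auto. Qed.

Lemma ld_const a p c : ld a (fun _ => c) p 0.
Proof. exact (is_derive_const (K:=R_AbsRing) (V:=R_NormedModule) c (coord p a)). Qed.

Definition sp (a : nat) : R := match a with 0%nat => 0 | _ => 1 end.
Definition kd (a b : nat) : R := if Nat.eqb a b then 1 else 0.

Lemma coord_upd p a b h : (a < 4)%nat -> (b < 4)%nat ->
  coord (upd p a h) b = if Nat.eqb a b then h else coord p b.
Proof. intros Ha Hb; destruct p as [[[t x1] x2] x3];
  destruct a as [|[|[|[|a]]]]; destruct b as [|[|[|[|b]]]]; try lia; reflexivity. Qed.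

Lemma upd_coord p a : upd p a (coord p a) = p.
Proof. destruct p as [[[t x1] x2] x3]; destruct a as [|[|[|[|a]]]]; reflexivity. Qed.

Lemma upd_upd p a h k : upd (upd p a h) a k = upd p a k.
Proof. destruct p as [[[t x1] x2] x3]; destruct a as [|[|[|[|a]]]]; reflexivity. Qed.

Lemma ld_coord a b p : (a < 4)%nat -> (b < 4)%nat -> ld a (fun x => coord x b) p (kd a b).
Proof. intros Ha Hb; unfold ld, kd.
  destruct p as [[[t x1] x2] x3];
  destruct a as [|[|[|[|a]]]]; destruct b as [|[|[|[|b]]]]; try lia; simpl;
  first [exact (is_derive_id (K:=R_AbsRing) _) |
         exact (is_derive_const (K:=R_AbsRing) (V:=R_NormedModule) _ _)]. Qed.

Lemma sqrt_pos_inv x : 0 < sqrt x -> 0 < x.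
Proof. intro H; destruct (Rlt_or_le 0 x) as [h|h]; auto.
  rewrite sqrt_neg_0 in H; lra. Qed.

Lemma ld_rad a p : (a < 4)%nat -> 0 < rad p -> ld a rad p (sp a * om p a).
Proof. intros Ha Hr; unfold ld, om, rad, sum3 in *.
  destruct p as [[[t x1] x2] x3];
  destruct a as [|[|[|[|a]]]]; try lia; simpl in *;
  [ replace (0 * _) with 0 by ring;
    exact (is_derive_const (K:=R_AbsRing) (V:=R_NormedModule) _ _) | .. ];
  (auto_derive; [ now apply sqrt_pos_inv | field; lra ]).
Qed.

Lemma ld_eq a u p l l' : ld a u p l -> l = l' -> ld a u p l'.
Proof. intros H E; now subst. Qed.

Lemma ld_div a u v p l1 l2 : ld a u p l1 -> ld a v p l2 -> v p <> 0 ->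
  ld a (fun x => u x / v x) p ((l1 * v p - u p * l2) / (v p) ^ 2).
Proof.
  intros H1 H2 Hv. unfold ld.
  rewrite <- (upd_coord p a) in Hv.
  pose proof (is_derive_div _ _ _ _ _ H1 H2 Hv) as H.
  replace ((l1 * v p - u p * l2) / (v p) ^ 2) with
    ((l1 * v (upd p a (coord p a)) - u (upd p a (coord p a)) * l2) / (v (upd p a (coord p a))) ^ 2)
    by (rewrite upd_coord; reflexivity). exact H.
Qed.

Definition dom (p : pt) (a j : nat) : R := sp a * (kd a j - om p a * om p j) / rad p.

Lemma ld_om a j p : (a < 4)%nat -> (1 <= j < 4)%nat -> 0 < rad p ->
  ld a (fun x => om x j) p (dom p a j).
Proof.
  intros Ha Hj Hr. unfold om at 1.
  eapply ld_eq.
  - apply ld_div; [apply ld_coord; lia | apply ld_rad; auto | lra].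
  - unfold dom, om, kd, sp.
    destruct a as [|[|[|[|a]]]]; destruct j as [|[|[|[|j]]]]; try lia; simpl; field; lra.
Qed.

Lemma ld_phi phi a p : C2 phi -> (a < 4)%nat -> ld a phi p (pd a phi p).
Proof. intros [H1 _] Ha. unfold ld, pd. apply Derive_correct. now apply H1. Qed.

Lemma ld_pdphi phi a b p : C2 phi -> (a < 4)%nat -> (b < 4)%nat ->
  ld a (pd b phi) p (pd a (pd b phi) p).
Proof. intros [_ [H2 _]] Ha Hb. unfold ld. unfold pd at 2.
  apply Derive_correct. now apply H2. Qed.

Ltac ldleaf := first
  [ refine (ld_const _ _ _)
  | refine (ld_om _ _ _ _ _ _); [lia|lia|assumption]
  | refine (ld_rad _ _ _ _); [lia|assumption]
  | refine (ld_pdphi _ _ _ _ _ _ _); [assumption|lia|lia]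
  | refine (ld_phi _ _ _ _ _); [assumption|lia] ].

Ltac ldtac := repeat first
  [ ldleaf | refine (ld_div2 _ _ _ _ _) | refine (ld_minus _ _ _ _ _ _ _ _)
  | refine (ld_plus _ _ _ _ _ _ _ _) | refine (ld_mult _ _ _ _ _ _ _ _) ].

Definition DRV phi p a := sum3 (fun j => dom p a j * pd j phi p + om p j * pd a (pd j phi) p).

Lemma ld_dr phi p a : C2 phi -> 0 < rad p -> (a < 4)%nat -> ld a (dr phi) p (DRV phi p a).
Proof. intros HC Hr Ha. unfold dr, DRV, sum3.
  eapply ld_eq. { ldtac. } cbv beta; ring. Qed.

Definition tbd phi p a b := match b with
  | 0%nat => pd a (pd 0 phi) p + DRV phi p a
  | _ => pd a (pd b phi) p - (dom p a b * dr phi p + om p b * DRV phi p a) end.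

Lemma ld_tb phi p a b : C2 phi -> 0 < rad p -> (a < 4)%nat -> (b < 4)%nat ->
  ld a (tb b phi) p (tbd phi p a b).
Proof. intros HC Hr Ha Hb. pose proof (ld_dr phi p a HC Hr Ha) as HD.
  destruct b as [|b]; unfold tb, tbd.
  - eapply ld_eq. { refine (ld_plus _ _ _ _ _ _ _ _); [ldleaf|exact HD]. } cbv beta; ring.
  - eapply ld_eq. { refine (ld_minus _ _ _ _ _ _ _ _); [ldleaf|
       refine (ld_mult _ _ _ _ _ _ _ _); [ldleaf|exact HD]]. } cbv beta; ring.
Qed.

Lemma pd_tb phi p a b : C2 phi -> 0 < rad p -> (a < 4)%nat -> (b < 4)%nat ->
  pd a (tb b phi) p = tbd phi p a b.
Proof. intros; apply ld_pd; now apply ld_tb. Qed.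

Lemma pd_rphi phi x j : C2 phi -> 0 < rad x -> (j < 4)%nat ->
  pd j (fun y => rad y * phi y) x = sp j * om x j * phi x + rad x * pd j phi x.
Proof. intros HC Hr Hj. apply ld_pd. eapply ld_eq.
  { refine (ld_mult _ _ _ _ _ _ _ _); ldleaf. } ring. Qed.

Definition dqf phi x := (sum3 (fun j => om x j * (om x j * phi x + rad x * pd j phi x)) - rad x * pd 0 phi x)/2.

Lemma dq_rphi phi x : C2 phi -> 0 < rad x -> dq (fun y => rad y * phi y) x = dqf phi x.
Proof. intros HC Hr. unfold dq, dr, dqf, sum3.
  rewrite !pd_rphi by (auto; lia). simpl. apply f_equal2; [|reflexivity]. ring. Qed.

Definition DQF phi p a := (sum3 (fun j => dom p a j * (om p j * phi p + rad p * pd j phi p)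
   + om p j * ((dom p a j * phi p + om p j * pd a phi p) + (sp a * om p a * pd j phi p + rad p * pd a (pd j phi) p)))
   - (sp a * om p a * pd 0 phi p + rad p * pd a (pd 0 phi) p))/2.

Lemma ld_dqf phi p a : C2 phi -> 0 < rad p -> (a < 4)%nat -> ld a (dqf phi) p (DQF phi p a).
Proof. intros HC Hr Ha. unfold dqf, DQF, sum3. eapply ld_eq. { ldtac. } cbv beta; ring. Qed.

Lemma rad_loc p a : (a < 4)%nat -> 0 < rad p ->
  locally (coord p a) (fun h => 0 < rad (upd p a h)).
Proof. intros Ha Hr.
  pose proof (ld_rad a p Ha Hr) as Hd.
  assert (Hc : continuous (fun h => rad (upd p a h)) (coord p a)).
  { apply (ex_derive_continuous (K:=R_AbsRing) (V:=R_NormedModule)). eexists. exact Hd. }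
  apply Hc. apply (open_gt 0). rewrite upd_coord. exact Hr.
Qed.

Lemma ld_dq phi p a : C2 phi -> 0 < rad p -> (a < 4)%nat ->
  ld a (dq (fun y => rad y * phi y)) p (DQF phi p a).
Proof. intros HC Hr Ha. unfold ld.
  apply (is_derive_ext_loc (fun h => dqf phi (upd p a h))).
  - apply (filter_imp (fun h => 0 < rad (upd p a h))); [|now apply rad_loc].
    intros h Hh. symmetry. now apply dq_rphi.
  - now apply ld_dqf.
Qed.

Lemma ballR x e y : Rabs (y - x) < e -> @ball R_UniformSpace x e y.
Proof. intro H. exact H. Qed.

Lemma cont2d (G : pt -> R) p a b : (a < 4)%nat -> (b < 4)%nat -> a <> b ->
  continuous G p ->
  continuity_2d_pt (fun u v => G (upd (upd p a u) b v)) (coord p a) (coord p b).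
Proof.
  intros Ha Hb Hab Hc eps.
  destruct (Hc (ball (G p) eps) (locally_ball (G p) eps)) as [d Hd].
  exists d. intros u v Hu Hv.
  assert (B : ball p d (upd (upd p a u) b v)).
  { destruct p as [[[t x1] x2] x3].
    destruct a as [|[|[|[|a]]]]; destruct b as [|[|[|[|b]]]]; try lia; simpl in *;
    repeat split; first [ apply ballR; assumption | apply ball_center ]. }
  specialize (Hd _ B). rewrite !upd_coord. exact Hd.
Qed.

Lemma upd_comm p a b u v : (a < 4)%nat -> (b < 4)%nat -> a <> b ->
  upd (upd p a u) b v = upd (upd p b v) a u.
Proof. intros; destruct p as [[[t x1] x2] x3];
  destruct a as [|[|[|[|a]]]]; destruct b as [|[|[|[|b]]]]; try lia; reflexivity. Qed.

Lemma coord_upd_ne p a b u : (a < 4)%nat -> (b < 4)%nat -> a <> b -> coord (upd p a u) b = coord p b.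
Proof. intros; destruct p as [[[t x1] x2] x3];
  destruct a as [|[|[|[|a]]]]; destruct b as [|[|[|[|b]]]]; try lia; reflexivity. Qed.

Lemma coord_upd_eq p a u : (a < 4)%nat -> coord (upd p a u) a = u.
Proof. intros; destruct p as [[[t x1] x2] x3];
  destruct a as [|[|[|[|a]]]]; try lia; reflexivity. Qed.

Lemma inner_eq (u : pt -> R) p a b z v : (a < 4)%nat -> (b < 4)%nat -> a <> b ->
  Derive (fun t => u (upd (upd p a z) b t)) v = pd b u (upd (upd p b v) a z).
Proof. intros Ha Hb Hab. unfold pd.
  rewrite coord_upd_ne by auto. rewrite coord_upd_eq by auto.
  apply Derive_ext. intro t. rewrite (upd_comm p b a v z) by auto. rewrite upd_upd.
  reflexivity. Qed.

Lemma schwarz phi p a b : C2 phi -> (a < 4)%nat -> (b < 4)%nat ->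
  pd a (pd b phi) p = pd b (pd a phi) p.
Proof.
  intros HC Ha Hb. destruct (Nat.eq_dec a b) as [->|Hab]; [reflexivity|].
  destruct HC as [C1 [C2' C3]].
  pose (f := fun z t => phi (upd (upd p a z) b t)).
  assert (E1 : forall z v, Derive (fun t => f z t) v = pd b phi (upd (upd p b v) a z)).
  { intros; unfold f; now apply inner_eq. }
  assert (E2 : forall t u, Derive (fun z => f z t) u = pd a phi (upd (upd p a u) b t)).
  { intros. unfold f. rewrite <- (inner_eq phi p b a t u) by auto.
    apply Derive_ext; intro; now rewrite upd_comm by auto. }
  assert (F1 : forall u v, Derive (fun z => Derive (fun t => f z t) v) u
                          = pd a (pd b phi) (upd (upd p b v) a u)).
  { intros. unfold pd at 1. rewrite coord_upd_eq by auto.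
    apply Derive_ext; intro z. rewrite E1, upd_upd. reflexivity. }
  assert (F2 : forall u v, Derive (fun z => Derive (fun t => f t z) u) v
                          = pd b (pd a phi) (upd (upd p a u) b v)).
  { intros. unfold pd at 1. rewrite coord_upd_eq by auto.
    apply Derive_ext; intro z. rewrite E2, upd_upd. reflexivity. }
  pose proof (Schwarz f (coord p a) (coord p b)) as HS.
  rewrite F1, F2 in HS. rewrite !upd_coord in HS. apply HS.
  - exists (mkposreal 1 Rlt_0_1). intros u v _ _. repeat split.
    + apply (ex_derive_ext (fun z => phi (upd (upd (upd p b v) a u) a z))).
      { intro z. unfold f. rewrite upd_upd, upd_comm by auto. reflexivity. }
      pose proof (C1 a (upd (upd p b v) a u) Ha) as H. rewrite coord_upd_eq in H by auto.
      exact H.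
    + apply (ex_derive_ext (fun z => phi (upd (upd (upd p a u) b v) b z))).
      { intro z. unfold f. rewrite upd_upd. reflexivity. }
      pose proof (C1 b (upd (upd p a u) b v) Hb) as H. rewrite coord_upd_eq in H by auto.
      exact H.
    + apply (ex_derive_ext (fun z => pd b phi (upd (upd (upd p b v) a u) a z))).
      { intro z. rewrite E1, upd_upd. reflexivity. }
      pose proof (C2' a b (upd (upd p b v) a u) Ha Hb) as H. rewrite coord_upd_eq in H by auto.
      exact H.
    + apply (ex_derive_ext (fun z => pd a phi (upd (upd (upd p a u) b v) b z))).
      { intro z. rewrite E2, upd_upd. reflexivity. }
      pose proof (C2' b a (upd (upd p a u) b v) Hb Ha) as H. rewrite coord_upd_eq in H by auto.
      exact H.
  - intro eps. destruct (cont2d (pd a (pd b phi)) p b a Hb Ha (not_eq_sym Hab) (C3 a b p Ha Hb) eps)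
      as [d Hd]. exists d. intros u v Hu Hv. rewrite !F1.
    rewrite !upd_coord in *. now apply Hd.
  - intro eps. destruct (cont2d (pd b (pd a phi)) p a b Ha Hb Hab (C3 b a p Hb Ha) eps)
      as [d Hd]. exists d. intros u v Hu Hv. rewrite !F2.
    rewrite !upd_coord in *. now apply Hd.
Qed.

Section Core.
Variables (w : nat -> R) (r ph : R) (D : nat -> R) (DD Hh : nat -> nat -> R).
Definition domA a j := sp a * (kd a j - w a * w j) / r.
Definition drA := sum3 (fun j => w j * D j).
Definition DRVA a := sum3 (fun j => domA a j * D j + w j * DD a j).
Definition tbdA a b := match b with
  | 0%nat => DD a 0 + DRVA a
  | _ => DD a b - (domA a b * drA + w b * DRVA a) end.
Definition TTA a b := match a with
  | 0%nat => tbdA 0 b + sum3 (fun j => w j * tbdA j b)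
  | _ => tbdA a b - w a * sum3 (fun j => w j * tbdA j b) end.
Definition TPA a b := match a with
  | 0%nat => DD 0 b + sum3 (fun j => w j * DD j b)
  | _ => DD a b - w a * sum3 (fun j => w j * DD j b) end.
Definition TA a := match a with
  | 0%nat => D 0 + drA
  | _ => D a - w a * drA end.
Definition dqfA := (sum3 (fun j => w j * (w j * ph + r * D j)) - r * D 0)/2.
Definition DQFA a := (sum3 (fun j => domA a j * (w j * ph + r * D j)
   + w j * ((domA a j * ph + w j * D a) + (sp a * w a * D j + r * DD a j)))
   - (sp a * w a * D 0 + r * DD a 0))/2.
Definition dsdqA := (DQFA 0 + sum3 (fun j => w j * DQFA j)) / 2.
Definition dqdqA := (sum3 (fun j => w j * DQFA j) - DQFA 0) / 2.
Definition Lw a := match a with 0%nat => 1 | _ => w a end.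
Definition Lbw a := match a with 0%nat => 1 | _ => - w a end.
Definition FA := sum4 (fun a => sum4 (fun b => (Hh a b + mink a b) * DD a b)).
Definition gA := - / 2 + / 4 * lowc Hh Lbw Lw.
Definition PP i j := kd i j - w i * w j.
Definition trHP := sum3 (fun i => sum3 (fun j => Hh i j * PP i j)).
Definition ev i a := kd a i.
Definition XA := 4 * dsdqA - lowc Hh Lw Lw / (2 * gA) * dqdqA
   - (trHP + lowc Hh Lw Lbw) / (2 * gA * r) * dqfA + r * FA / (2 * gA).
Definition YA := r * (TTA 1 1 + TTA 2 2 + TTA 3 3)
   + lowc Hh Lw Lbw * (TA 0 - ph / r) / 2
   - lowc Hh Lw Lw * (drA - D 0) / 2
   + r / 4 * lowc Hh Lbw Lbw * TTA 0 0
   - r * sum3 (fun i => sum3 (fun j => lowc Hh Lbw (ev i) * PP i j * TTA 0 j))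
   - r * sum3 (fun i => sum3 (fun j => lowc Hh Lw (ev i) * PP i j * sum4 (fun a => Lbw a * TPA j a)))
   + r * sum3 (fun m => sum3 (fun n => Hh m n * sum3 (fun i => sum3 (fun j => PP m i * PP n j * TTA i j))))
   + trHP * (TA 0 - ph / r) / 2.

Lemma core_id : w 1 * w 1 + w 2 * w 2 + w 3 * w 3 = 1 -> r <> 0 -> gA <> 0 ->
  (forall a b, (a < 4)%nat -> (b < 4)%nat -> DD a b = DD b a) ->
  (forall a b, (a < 4)%nat -> (b < 4)%nat -> Hh a b = Hh b a) ->
  2 * gA * XA = YA.
Proof.
  intros HW Hr Hg HDD HH.
  assert (Hx : 2 * gA * XA = 8 * gA * dsdqA - lowc Hh Lw Lw * dqdqA
     - (trHP + lowc Hh Lw Lbw) * / r * dqfA + r * FA).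
  { unfold XA. field. split; auto. }
  rewrite Hx. clear Hx Hg.
  unfold YA, gA, dsdqA, dqdqA, DQFA, dqfA, FA, TTA, TPA, TA, trHP, PP, tbdA, DRVA, drA, domA,
    lowc, Lw, Lbw, ev, sum3, sum4, mink, kd, sp; simpl.
  rewrite ?(HDD 1%nat 0%nat ltac:(lia) ltac:(lia)), ?(HDD 2%nat 0%nat ltac:(lia) ltac:(lia)), ?(HDD 3%nat 0%nat ltac:(lia) ltac:(lia)), ?(HDD 2%nat 1%nat ltac:(lia) ltac:(lia)), ?(HDD 3%nat 1%nat ltac:(lia) ltac:(lia)), ?(HDD 3%nat 2%nat ltac:(lia) ltac:(lia)).
  rewrite ?(HH 1%nat 0%nat ltac:(lia) ltac:(lia)), ?(HH 2%nat 0%nat ltac:(lia) ltac:(lia)), ?(HH 3%nat 0%nat ltac:(lia) ltac:(lia)), ?(HH 2%nat 1%nat ltac:(lia) ltac:(lia)), ?(HH 3%nat 1%nat ltac:(lia) ltac:(lia)), ?(HH 3%nat 2%nat ltac:(lia) ltac:(lia)).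
  unfold Rdiv. set (ir := / r).
  assert (Hri : r * ir = 1) by (unfold ir; field; exact Hr).
  clearbody ir.
  apply Rminus_diag_uniq.
  transitivity (((1/2)*D 0*Hh 0 0 + (-1)*D 0*Hh 0 1*w 1 + (-1)*D 0*Hh 0 2*w 2 + (-1)*D 0*Hh 0 3*w 3 + (1/2)*D 0*Hh 1 1*w 1*w 1 + (1)*D 0*Hh 1 2*w 1*w 2 + (1)*D 0*Hh 1 3*w 1*w 3 + (1/2)*D 0*Hh 2 2*w 2*w 2 + (1)*D 0*Hh 2 3*w 2*w 3 + (1/2)*D 0*Hh 3 3*w 3*w 3 + (1/2)*D 1*Hh 0 0*w 1 + (-1)*D 1*Hh 0 1*w 1*w 1 + (2)*D 1*Hh 0 1*w 1*w 1*w 2*w 2 + (2)*D 1*Hh 0 1*w 1*w 1*w 3*w 3 + (2)*D 1*Hh 0 1*w 1*w 1*w 1*w 1 + (-1)*D 1*Hh 0 2*w 1*w 2 + (2)*D 1*Hh 0 2*w 1*w 2*w 3*w 3 + (2)*D 1*Hh 0 2*w 1*w 2*w 2*w 2 + (2)*D 1*Hh 0 2*w 1*w 1*w 1*w 2 + (2)*D 1*Hh 0 3*w 1*w 2*w 2*w 3 + (-1)*D 1*Hh 0 3*w 1*w 3 + (2)*D 1*Hh 0 3*w 1*w 3*w 3*w 3 + (2)*D 1*Hh 0 3*w 1*w 1*w 1*w 3 + (-1)*D 1*Hh 1 1*w 1 + (7/2)*D 1*Hh 1 1*w 1*w 1*w 1 + (-4)*D 1*Hh 1 1*w 1*w 1*w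 1*w 2*w 2 + (4)*D 1*Hh 1 1*w 1*w 1*w 1*w 2*w 2*w 3*w 3 + (2)*D 1*Hh 1 1*w 1*w 1*w 1*w 2*w 2*w 2*w 2 + (-4)*D 1*Hh 1 1*w 1*w 1*w 1*w 3*w 3 + (2)*D 1*Hh 1 1*w 1*w 1*w 1*w 3*w 3*w 3*w 3 + (-4)*D 1*Hh 1 1*w 1*w 1*w 1*w 1*w 1 + (4)*D 1*Hh 1 1*w 1*w 1*w 1*w 1*w 1*w 2*w 2 + (4)*D 1*Hh 1 1*w 1*w 1*w 1*w 1*w 1*w 3*w 3 + (2)*D 1*Hh 1 1*w 1*w 1*w 1*w 1*w 1*w 1*w 1 + (7)*D 1*Hh 1 2*w 1*w 1*w 2 + (-8)*D 1*Hh 1 2*w 1*w 1*w 2*w 3*w 3 + (4)*D 1*Hh 1 2*w 1*w 1*w 2*w 3*w 3*w 3*w 3 + (-8)*D 1*Hh 1 2*w 1*w 1*w 2*w 2*w 2 + (8)*D 1*Hh 1 2*w 1*w 1*w 2*w 2*w 2*w 3*w 3 + (4)*D 1*Hh 1 2*w 1*w 1*w 2*w 2*w 2*w 2*w 2 + (-8)*D 1*Hh 1 2*w 1*w 1*w 1*w 1*w 2 + (8)*D 1*Hh 1 2*w 1*w 1*w 1*w 1*w 2*w 3*w 3 + (8)*D 1*Hh 1 2*w 1*w 1*w 1*w 1*w 2*w 2*w 2 + (4)*D 1*Hh 1 2*w 1*w 1*w 1*w 1*w 1*w 1*w 2 + (-1)*D 1*Hh 1 2*w 2 + (-8)*D 1*Hh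 1 3*w 1*w 1*w 2*w 2*w 3 + (8)*D 1*Hh 1 3*w 1*w 1*w 2*w 2*w 3*w 3*w 3 + (4)*D 1*Hh 1 3*w 1*w 1*w 2*w 2*w 2*w 2*w 3 + (7)*D 1*Hh 1 3*w 1*w 1*w 3 + (-8)*D 1*Hh 1 3*w 1*w 1*w 3*w 3*w 3 + (4)*D 1*Hh 1 3*w 1*w 1*w 3*w 3*w 3*w 3*w 3 + (8)*D 1*Hh 1 3*w 1*w 1*w 1*w 1*w 2*w 2*w 3 + (-8)*D 1*Hh 1 3*w 1*w 1*w 1*w 1*w 3 + (8)*D 1*Hh 1 3*w 1*w 1*w 1*w 1*w 3*w 3*w 3 + (4)*D 1*Hh 1 3*w 1*w 1*w 1*w 1*w 1*w 1*w 3 + (-1)*D 1*Hh 1 3*w 3 + (7/2)*D 1*Hh 2 2*w 1*w 2*w 2 + (-4)*D 1*Hh 2 2*w 1*w 2*w 2*w 3*w 3 + (2)*D 1*Hh 2 2*w 1*w 2*w 2*w 3*w 3*w 3*w 3 + (-4)*D 1*Hh 2 2*w 1*w 2*w 2*w 2*w 2 + (4)*D 1*Hh 2 2*w 1*w 2*w 2*w 2*w 2*w 3*w 3 + (2)*D 1*Hh 2 2*w 1*w 2*w 2*w 2*w 2*w 2*w 2 + (-4)*D 1*Hh 2 2*w 1*w 1*w 1*w 2*w 2 + (4)*D 1*Hh 2 2*w 1*w 1*w 1*w 2*w 2*w 3*w 3 + (4)*D 1*Hh 2 2*w 1*w 1*w 1*w 2*w 2*w 2*w 2 + (2)*D 1*Hh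 2 2*w 1*w 1*w 1*w 1*w 1*w 2*w 2 + (7)*D 1*Hh 2 3*w 1*w 2*w 3 + (-8)*D 1*Hh 2 3*w 1*w 2*w 3*w 3*w 3 + (4)*D 1*Hh 2 3*w 1*w 2*w 3*w 3*w 3*w 3*w 3 + (-8)*D 1*Hh 2 3*w 1*w 2*w 2*w 2*w 3 + (8)*D 1*Hh 2 3*w 1*w 2*w 2*w 2*w 3*w 3*w 3 + (4)*D 1*Hh 2 3*w 1*w 2*w 2*w 2*w 2*w 2*w 3 + (-8)*D 1*Hh 2 3*w 1*w 1*w 1*w 2*w 3 + (8)*D 1*Hh 2 3*w 1*w 1*w 1*w 2*w 3*w 3*w 3 + (8)*D 1*Hh 2 3*w 1*w 1*w 1*w 2*w 2*w 2*w 3 + (4)*D 1*Hh 2 3*w 1*w 1*w 1*w 1*w 1*w 2*w 3 + (-4)*D 1*Hh 3 3*w 1*w 2*w 2*w 3*w 3 + (4)*D 1*Hh 3 3*w 1*w 2*w 2*w 3*w 3*w 3*w 3 + (2)*D 1*Hh 3 3*w 1*w 2*w 2*w 2*w 2*w 3*w 3 + (7/2)*D 1*Hh 3 3*w 1*w 3*w 3 + (-4)*D 1*Hh 3 3*w 1*w 3*w 3*w 3*w 3 + (2)*D 1*Hh 3 3*w 1*w 3*w 3*w 3*w 3*w 3*w 3 + (4)*D 1*Hh 3 3*w 1*w 1*w 1*w 2*w 2*w 3*w 3 + (-4)*D 1*Hh 3 3*w 1*w 1*w 1*w 3*w 3 + (4)*D 1*Hh 3 3*w 1*w 1*w 1*w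 3*w 3*w 3*w 3 + (2)*D 1*Hh 3 3*w 1*w 1*w 1*w 1*w 1*w 3*w 3 + (-3)*D 1*w 1 + (2)*D 1*w 1*w 2*w 2 + (2)*D 1*w 1*w 3*w 3 + (2)*D 1*w 1*w 1*w 1 + (1/2)*D 2*Hh 0 0*w 2 + (-1)*D 2*Hh 0 1*w 1*w 2 + (2)*D 2*Hh 0 1*w 1*w 2*w 3*w 3 + (2)*D 2*Hh 0 1*w 1*w 2*w 2*w 2 + (2)*D 2*Hh 0 1*w 1*w 1*w 1*w 2 + (2)*D 2*Hh 0 2*w 1*w 1*w 2*w 2 + (-1)*D 2*Hh 0 2*w 2*w 2 + (2)*D 2*Hh 0 2*w 2*w 2*w 3*w 3 + (2)*D 2*Hh 0 2*w 2*w 2*w 2*w 2 + (2)*D 2*Hh 0 3*w 1*w 1*w 2*w 3 + (-1)*D 2*Hh 0 3*w 2*w 3 + (2)*D 2*Hh 0 3*w 2*w 3*w 3*w 3 + (2)*D 2*Hh 0 3*w 2*w 2*w 2*w 3 + (7/2)*D 2*Hh 1 1*w 1*w 1*w 2 + (-4)*D 2*Hh 1 1*w 1*w 1*w 2*w 3*w 3 + (2)*D 2*Hh 1 1*w 1*w 1*w 2*w 3*w 3*w 3*w 3 + (-4)*D 2*Hh 1 1*w 1*w 1*w 2*w 2*w 2 + (4)*D 2*Hh 1 1*w 1*w 1*w 2*w 2*w 2*w 3*w 3 + (2)*D 2*Hh 1 1*w 1*w 1*w 2*w 2*w 2*w 2*w 2 + (-4)*D 2*Hh 1 1*w 1*w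 1*w 1*w 1*w 2 + (4)*D 2*Hh 1 1*w 1*w 1*w 1*w 1*w 2*w 3*w 3 + (4)*D 2*Hh 1 1*w 1*w 1*w 1*w 1*w 2*w 2*w 2 + (2)*D 2*Hh 1 1*w 1*w 1*w 1*w 1*w 1*w 1*w 2 + (-1)*D 2*Hh 1 2*w 1 + (7)*D 2*Hh 1 2*w 1*w 2*w 2 + (-8)*D 2*Hh 1 2*w 1*w 2*w 2*w 3*w 3 + (4)*D 2*Hh 1 2*w 1*w 2*w 2*w 3*w 3*w 3*w 3 + (-8)*D 2*Hh 1 2*w 1*w 2*w 2*w 2*w 2 + (8)*D 2*Hh 1 2*w 1*w 2*w 2*w 2*w 2*w 3*w 3 + (4)*D 2*Hh 1 2*w 1*w 2*w 2*w 2*w 2*w 2*w 2 + (-8)*D 2*Hh 1 2*w 1*w 1*w 1*w 2*w 2 + (8)*D 2*Hh 1 2*w 1*w 1*w 1*w 2*w 2*w 3*w 3 + (8)*D 2*Hh 1 2*w 1*w 1*w 1*w 2*w 2*w 2*w 2 + (4)*D 2*Hh 1 2*w 1*w 1*w 1*w 1*w 1*w 2*w 2 + (7)*D 2*Hh 1 3*w 1*w 2*w 3 + (-8)*D 2*Hh 1 3*w 1*w 2*w 3*w 3*w 3 + (4)*D 2*Hh 1 3*w 1*w 2*w 3*w 3*w 3*w 3*w 3 + (-8)*D 2*Hh 1 3*w 1*w 2*w 2*w 2*w 3 + (8)*D 2*Hh 1 3*w 1*w 2*w 2*w 2*w 3*w 3*w 3 + (4)*D 2*Hh 1 3*w 1*w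 2*w 2*w 2*w 2*w 2*w 3 + (-8)*D 2*Hh 1 3*w 1*w 1*w 1*w 2*w 3 + (8)*D 2*Hh 1 3*w 1*w 1*w 1*w 2*w 3*w 3*w 3 + (8)*D 2*Hh 1 3*w 1*w 1*w 1*w 2*w 2*w 2*w 3 + (4)*D 2*Hh 1 3*w 1*w 1*w 1*w 1*w 1*w 2*w 3 + (-4)*D 2*Hh 2 2*w 1*w 1*w 2*w 2*w 2 + (4)*D 2*Hh 2 2*w 1*w 1*w 2*w 2*w 2*w 3*w 3 + (4)*D 2*Hh 2 2*w 1*w 1*w 2*w 2*w 2*w 2*w 2 + (2)*D 2*Hh 2 2*w 1*w 1*w 1*w 1*w 2*w 2*w 2 + (-1)*D 2*Hh 2 2*w 2 + (7/2)*D 2*Hh 2 2*w 2*w 2*w 2 + (-4)*D 2*Hh 2 2*w 2*w 2*w 2*w 3*w 3 + (2)*D 2*Hh 2 2*w 2*w 2*w 2*w 3*w 3*w 3*w 3 + (-4)*D 2*Hh 2 2*w 2*w 2*w 2*w 2*w 2 + (4)*D 2*Hh 2 2*w 2*w 2*w 2*w 2*w 2*w 3*w 3 + (2)*D 2*Hh 2 2*w 2*w 2*w 2*w 2*w 2*w 2*w 2 + (-8)*D 2*Hh 2 3*w 1*w 1*w 2*w 2*w 3 + (8)*D 2*Hh 2 3*w 1*w 1*w 2*w 2*w 3*w 3*w 3 + (8)*D 2*Hh 2 3*w 1*w 1*w 2*w 2*w 2*w 2*w 3 + (4)*D 2*Hh 2 3*w 1*w 1*w 1*w 1*w 2*w 2*w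 3 + (7)*D 2*Hh 2 3*w 2*w 2*w 3 + (-8)*D 2*Hh 2 3*w 2*w 2*w 3*w 3*w 3 + (4)*D 2*Hh 2 3*w 2*w 2*w 3*w 3*w 3*w 3*w 3 + (-8)*D 2*Hh 2 3*w 2*w 2*w 2*w 2*w 3 + (8)*D 2*Hh 2 3*w 2*w 2*w 2*w 2*w 3*w 3*w 3 + (4)*D 2*Hh 2 3*w 2*w 2*w 2*w 2*w 2*w 2*w 3 + (-1)*D 2*Hh 2 3*w 3 + (-4)*D 2*Hh 3 3*w 1*w 1*w 2*w 3*w 3 + (4)*D 2*Hh 3 3*w 1*w 1*w 2*w 3*w 3*w 3*w 3 + (4)*D 2*Hh 3 3*w 1*w 1*w 2*w 2*w 2*w 3*w 3 + (2)*D 2*Hh 3 3*w 1*w 1*w 1*w 1*w 2*w 3*w 3 + (7/2)*D 2*Hh 3 3*w 2*w 3*w 3 + (-4)*D 2*Hh 3 3*w 2*w 3*w 3*w 3*w 3 + (2)*D 2*Hh 3 3*w 2*w 3*w 3*w 3*w 3*w 3*w 3 + (-4)*D 2*Hh 3 3*w 2*w 2*w 2*w 3*w 3 + (4)*D 2*Hh 3 3*w 2*w 2*w 2*w 3*w 3*w 3*w 3 + (2)*D 2*Hh 3 3*w 2*w 2*w 2*w 2*w 2*w 3*w 3 + (2)*D 2*w 1*w 1*w 2 + (-3)*D 2*w 2 + (2)*D 2*w 2*w 3*w 3 + (2)*D 2*w 2*w 2*w 2 + (1/2)*D 3*Hh 0 0*w 3 + (2)*D 3*Hh 0 1*w 1*w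 2*w 2*w 3 + (-1)*D 3*Hh 0 1*w 1*w 3 + (2)*D 3*Hh 0 1*w 1*w 3*w 3*w 3 + (2)*D 3*Hh 0 1*w 1*w 1*w 1*w 3 + (2)*D 3*Hh 0 2*w 1*w 1*w 2*w 3 + (-1)*D 3*Hh 0 2*w 2*w 3 + (2)*D 3*Hh 0 2*w 2*w 3*w 3*w 3 + (2)*D 3*Hh 0 2*w 2*w 2*w 2*w 3 + (2)*D 3*Hh 0 3*w 1*w 1*w 3*w 3 + (2)*D 3*Hh 0 3*w 2*w 2*w 3*w 3 + (-1)*D 3*Hh 0 3*w 3*w 3 + (2)*D 3*Hh 0 3*w 3*w 3*w 3*w 3 + (-4)*D 3*Hh 1 1*w 1*w 1*w 2*w 2*w 3 + (4)*D 3*Hh 1 1*w 1*w 1*w 2*w 2*w 3*w 3*w 3 + (2)*D 3*Hh 1 1*w 1*w 1*w 2*w 2*w 2*w 2*w 3 + (7/2)*D 3*Hh 1 1*w 1*w 1*w 3 + (-4)*D 3*Hh 1 1*w 1*w 1*w 3*w 3*w 3 + (2)*D 3*Hh 1 1*w 1*w 1*w 3*w 3*w 3*w 3*w 3 + (4)*D 3*Hh 1 1*w 1*w 1*w 1*w 1*w 2*w 2*w 3 + (-4)*D 3*Hh 1 1*w 1*w 1*w 1*w 1*w 3 + (4)*D 3*Hh 1 1*w 1*w 1*w 1*w 1*w 3*w 3*w 3 + (2)*D 3*Hh 1 1*w 1*w 1*w 1*w 1*w 1*w 1*w 3 + (7)*D 3*Hh 1 2*w 1*w 2*w 3 + (-8)*D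 3*Hh 1 2*w 1*w 2*w 3*w 3*w 3 + (4)*D 3*Hh 1 2*w 1*w 2*w 3*w 3*w 3*w 3*w 3 + (-8)*D 3*Hh 1 2*w 1*w 2*w 2*w 2*w 3 + (8)*D 3*Hh 1 2*w 1*w 2*w 2*w 2*w 3*w 3*w 3 + (4)*D 3*Hh 1 2*w 1*w 2*w 2*w 2*w 2*w 2*w 3 + (-8)*D 3*Hh 1 2*w 1*w 1*w 1*w 2*w 3 + (8)*D 3*Hh 1 2*w 1*w 1*w 1*w 2*w 3*w 3*w 3 + (8)*D 3*Hh 1 2*w 1*w 1*w 1*w 2*w 2*w 2*w 3 + (4)*D 3*Hh 1 2*w 1*w 1*w 1*w 1*w 1*w 2*w 3 + (-1)*D 3*Hh 1 3*w 1 + (-8)*D 3*Hh 1 3*w 1*w 2*w 2*w 3*w 3 + (8)*D 3*Hh 1 3*w 1*w 2*w 2*w 3*w 3*w 3*w 3 + (4)*D 3*Hh 1 3*w 1*w 2*w 2*w 2*w 2*w 3*w 3 + (7)*D 3*Hh 1 3*w 1*w 3*w 3 + (-8)*D 3*Hh 1 3*w 1*w 3*w 3*w 3*w 3 + (4)*D 3*Hh 1 3*w 1*w 3*w 3*w 3*w 3*w 3*w 3 + (8)*D 3*Hh 1 3*w 1*w 1*w 1*w 2*w 2*w 3*w 3 + (-8)*D 3*Hh 1 3*w 1*w 1*w 1*w 3*w 3 + (8)*D 3*Hh 1 3*w 1*w 1*w 1*w 3*w 3*w 3*w 3 + (4)*D 3*Hh 1 3*w 1*w 1*w 1*w 1*w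 1*w 3*w 3 + (-4)*D 3*Hh 2 2*w 1*w 1*w 2*w 2*w 3 + (4)*D 3*Hh 2 2*w 1*w 1*w 2*w 2*w 3*w 3*w 3 + (4)*D 3*Hh 2 2*w 1*w 1*w 2*w 2*w 2*w 2*w 3 + (2)*D 3*Hh 2 2*w 1*w 1*w 1*w 1*w 2*w 2*w 3 + (7/2)*D 3*Hh 2 2*w 2*w 2*w 3 + (-4)*D 3*Hh 2 2*w 2*w 2*w 3*w 3*w 3 + (2)*D 3*Hh 2 2*w 2*w 2*w 3*w 3*w 3*w 3*w 3 + (-4)*D 3*Hh 2 2*w 2*w 2*w 2*w 2*w 3 + (4)*D 3*Hh 2 2*w 2*w 2*w 2*w 2*w 3*w 3*w 3 + (2)*D 3*Hh 2 2*w 2*w 2*w 2*w 2*w 2*w 2*w 3 + (-8)*D 3*Hh 2 3*w 1*w 1*w 2*w 3*w 3 + (8)*D 3*Hh 2 3*w 1*w 1*w 2*w 3*w 3*w 3*w 3 + (8)*D 3*Hh 2 3*w 1*w 1*w 2*w 2*w 2*w 3*w 3 + (4)*D 3*Hh 2 3*w 1*w 1*w 1*w 1*w 2*w 3*w 3 + (-1)*D 3*Hh 2 3*w 2 + (7)*D 3*Hh 2 3*w 2*w 3*w 3 + (-8)*D 3*Hh 2 3*w 2*w 3*w 3*w 3*w 3 + (4)*D 3*Hh 2 3*w 2*w 3*w 3*w 3*w 3*w 3*w 3 + (-8)*D 3*Hh 2 3*w 2*w 2*w 2*w 3*w 3 + (8)*D 3*Hh 2 3*w 2*w 2*w 2*w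 3*w 3*w 3*w 3 + (4)*D 3*Hh 2 3*w 2*w 2*w 2*w 2*w 2*w 3*w 3 + (4)*D 3*Hh 3 3*w 1*w 1*w 2*w 2*w 3*w 3*w 3 + (-4)*D 3*Hh 3 3*w 1*w 1*w 3*w 3*w 3 + (4)*D 3*Hh 3 3*w 1*w 1*w 3*w 3*w 3*w 3*w 3 + (2)*D 3*Hh 3 3*w 1*w 1*w 1*w 1*w 3*w 3*w 3 + (-4)*D 3*Hh 3 3*w 2*w 2*w 3*w 3*w 3 + (4)*D 3*Hh 3 3*w 2*w 2*w 3*w 3*w 3*w 3*w 3 + (2)*D 3*Hh 3 3*w 2*w 2*w 2*w 2*w 3*w 3*w 3 + (-1)*D 3*Hh 3 3*w 3 + (7/2)*D 3*Hh 3 3*w 3*w 3*w 3 + (-4)*D 3*Hh 3 3*w 3*w 3*w 3*w 3*w 3 + (2)*D 3*Hh 3 3*w 3*w 3*w 3*w 3*w 3*w 3*w 3 + (2)*D 3*w 1*w 1*w 3 + (2)*D 3*w 2*w 2*w 3 + (-3)*D 3*w 3 + (2)*D 3*w 3*w 3*w 3 + (-2)*DD 0 1*Hh 0 1*r*w 1*w 1 + (-2)*DD 0 1*Hh 0 2*r*w 1*w 2 + (-2)*DD 0 1*Hh 0 3*r*w 1*w 3 + (-2)*DD 0 2*Hh 0 1*r*w 1*w 2 + (-2)*DD 0 2*Hh 0 2*r*w 2*w 2 + (-2)*DD 0 2*Hh 0 3*r*w 2*w 3 + (-2)*DD 0 3*Hh 0 1*r*w 1*w 3 + (-2)*DD 0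 3*Hh 0 2*r*w 2*w 3 + (-2)*DD 0 3*Hh 0 3*r*w 3*w 3 + (-2)*DD 1 1*Hh 1 1*r*w 1*w 1 + (1)*DD 1 1*Hh 1 1*r*w 1*w 1*w 1*w 1 + (-1)*DD 1 1*Hh 1 1*r*w 1*w 1*w 1*w 1*w 2*w 2 + (-1)*DD 1 1*Hh 1 1*r*w 1*w 1*w 1*w 1*w 3*w 3 + (-1)*DD 1 1*Hh 1 1*r*w 1*w 1*w 1*w 1*w 1*w 1 + (-2)*DD 1 1*Hh 1 2*r*w 1*w 2 + (2)*DD 1 1*Hh 1 2*r*w 1*w 1*w 1*w 2 + (-2)*DD 1 1*Hh 1 2*r*w 1*w 1*w 1*w 2*w 3*w 3 + (-2)*DD 1 1*Hh 1 2*r*w 1*w 1*w 1*w 2*w 2*w 2 + (-2)*DD 1 1*Hh 1 2*r*w 1*w 1*w 1*w 1*w 1*w 2 + (-2)*DD 1 1*Hh 1 3*r*w 1*w 3 + (-2)*DD 1 1*Hh 1 3*r*w 1*w 1*w 1*w 2*w 2*w 3 + (2)*DD 1 1*Hh 1 3*r*w 1*w 1*w 1*w 3 + (-2)*DD 1 1*Hh 1 3*r*w 1*w 1*w 1*w 3*w 3*w 3 + (-2)*DD 1 1*Hh 1 3*r*w 1*w 1*w 1*w 1*w 1*w 3 + (1)*DD 1 1*Hh 2 2*r*w 1*w 1*w 2*w 2 + (-1)*DD 1 1*Hh 2 2*r*w 1*w 1*w 2*w 2*w 3*w 3 + (-1)*DD 1 1*Hh 2 2*r*w 1*w 1*w 2*w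 2*w 2*w 2 + (-1)*DD 1 1*Hh 2 2*r*w 1*w 1*w 1*w 1*w 2*w 2 + (2)*DD 1 1*Hh 2 3*r*w 1*w 1*w 2*w 3 + (-2)*DD 1 1*Hh 2 3*r*w 1*w 1*w 2*w 3*w 3*w 3 + (-2)*DD 1 1*Hh 2 3*r*w 1*w 1*w 2*w 2*w 2*w 3 + (-2)*DD 1 1*Hh 2 3*r*w 1*w 1*w 1*w 1*w 2*w 3 + (-1)*DD 1 1*Hh 3 3*r*w 1*w 1*w 2*w 2*w 3*w 3 + (1)*DD 1 1*Hh 3 3*r*w 1*w 1*w 3*w 3 + (-1)*DD 1 1*Hh 3 3*r*w 1*w 1*w 3*w 3*w 3*w 3 + (-1)*DD 1 1*Hh 3 3*r*w 1*w 1*w 1*w 1*w 3*w 3 + (-1)*DD 1 1*r*w 1*w 1 + (-2)*DD 1 2*Hh 1 1*r*w 1*w 2 + (2)*DD 1 2*Hh 1 1*r*w 1*w 1*w 1*w 2 + (-2)*DD 1 2*Hh 1 1*r*w 1*w 1*w 1*w 2*w 3*w 3 + (-2)*DD 1 2*Hh 1 1*r*w 1*w 1*w 1*w 2*w 2*w 2 + (-2)*DD 1 2*Hh 1 1*r*w 1*w 1*w 1*w 1*w 1*w 2 + (-2)*DD 1 2*Hh 1 2*r*w 1*w 1 + (4)*DD 1 2*Hh 1 2*r*w 1*w 1*w 2*w 2 + (-4)*DD 1 2*Hh 1 2*r*w 1*w 1*w 2*w 2*w 3*w 3 + (-4)*DD 1 2*Hh 1 2*r*w 1*w 1*w 2*w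 2*w 2*w 2 + (-4)*DD 1 2*Hh 1 2*r*w 1*w 1*w 1*w 1*w 2*w 2 + (-2)*DD 1 2*Hh 1 2*r*w 2*w 2 + (4)*DD 1 2*Hh 1 3*r*w 1*w 1*w 2*w 3 + (-4)*DD 1 2*Hh 1 3*r*w 1*w 1*w 2*w 3*w 3*w 3 + (-4)*DD 1 2*Hh 1 3*r*w 1*w 1*w 2*w 2*w 2*w 3 + (-4)*DD 1 2*Hh 1 3*r*w 1*w 1*w 1*w 1*w 2*w 3 + (-2)*DD 1 2*Hh 1 3*r*w 2*w 3 + (-2)*DD 1 2*Hh 2 2*r*w 1*w 2 + (2)*DD 1 2*Hh 2 2*r*w 1*w 2*w 2*w 2 + (-2)*DD 1 2*Hh 2 2*r*w 1*w 2*w 2*w 2*w 3*w 3 + (-2)*DD 1 2*Hh 2 2*r*w 1*w 2*w 2*w 2*w 2*w 2 + (-2)*DD 1 2*Hh 2 2*r*w 1*w 1*w 1*w 2*w 2*w 2 + (4)*DD 1 2*Hh 2 3*r*w 1*w 2*w 2*w 3 + (-4)*DD 1 2*Hh 2 3*r*w 1*w 2*w 2*w 3*w 3*w 3 + (-4)*DD 1 2*Hh 2 3*r*w 1*w 2*w 2*w 2*w 2*w 3 + (-2)*DD 1 2*Hh 2 3*r*w 1*w 3 + (-4)*DD 1 2*Hh 2 3*r*w 1*w 1*w 1*w 2*w 2*w 3 + (2)*DD 1 2*Hh 3 3*r*w 1*w 2*w 3*w 3 + (-2)*DD 1 2*Hh 3 3*r*w 1*w 2*w 3*w 3*w 3*w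 3 + (-2)*DD 1 2*Hh 3 3*r*w 1*w 2*w 2*w 2*w 3*w 3 + (-2)*DD 1 2*Hh 3 3*r*w 1*w 1*w 1*w 2*w 3*w 3 + (-2)*DD 1 2*r*w 1*w 2 + (-2)*DD 1 3*Hh 1 1*r*w 1*w 3 + (-2)*DD 1 3*Hh 1 1*r*w 1*w 1*w 1*w 2*w 2*w 3 + (2)*DD 1 3*Hh 1 1*r*w 1*w 1*w 1*w 3 + (-2)*DD 1 3*Hh 1 1*r*w 1*w 1*w 1*w 3*w 3*w 3 + (-2)*DD 1 3*Hh 1 1*r*w 1*w 1*w 1*w 1*w 1*w 3 + (4)*DD 1 3*Hh 1 2*r*w 1*w 1*w 2*w 3 + (-4)*DD 1 3*Hh 1 2*r*w 1*w 1*w 2*w 3*w 3*w 3 + (-4)*DD 1 3*Hh 1 2*r*w 1*w 1*w 2*w 2*w 2*w 3 + (-4)*DD 1 3*Hh 1 2*r*w 1*w 1*w 1*w 1*w 2*w 3 + (-2)*DD 1 3*Hh 1 2*r*w 2*w 3 + (-2)*DD 1 3*Hh 1 3*r*w 1*w 1 + (-4)*DD 1 3*Hh 1 3*r*w 1*w 1*w 2*w 2*w 3*w 3 + (4)*DD 1 3*Hh 1 3*r*w 1*w 1*w 3*w 3 + (-4)*DD 1 3*Hh 1 3*r*w 1*w 1*w 3*w 3*w 3*w 3 + (-4)*DD 1 3*Hh 1 3*r*w 1*w 1*w 1*w 1*w 3*w 3 + (-2)*DD 1 3*Hh 1 3*r*w 3*w 3 + (2)*DD 1 3*Hh 2 2*r*w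 1*w 2*w 2*w 3 + (-2)*DD 1 3*Hh 2 2*r*w 1*w 2*w 2*w 3*w 3*w 3 + (-2)*DD 1 3*Hh 2 2*r*w 1*w 2*w 2*w 2*w 2*w 3 + (-2)*DD 1 3*Hh 2 2*r*w 1*w 1*w 1*w 2*w 2*w 3 + (-2)*DD 1 3*Hh 2 3*r*w 1*w 2 + (4)*DD 1 3*Hh 2 3*r*w 1*w 2*w 3*w 3 + (-4)*DD 1 3*Hh 2 3*r*w 1*w 2*w 3*w 3*w 3*w 3 + (-4)*DD 1 3*Hh 2 3*r*w 1*w 2*w 2*w 2*w 3*w 3 + (-4)*DD 1 3*Hh 2 3*r*w 1*w 1*w 1*w 2*w 3*w 3 + (-2)*DD 1 3*Hh 3 3*r*w 1*w 2*w 2*w 3*w 3*w 3 + (-2)*DD 1 3*Hh 3 3*r*w 1*w 3 + (2)*DD 1 3*Hh 3 3*r*w 1*w 3*w 3*w 3 + (-2)*DD 1 3*Hh 3 3*r*w 1*w 3*w 3*w 3*w 3*w 3 + (-2)*DD 1 3*Hh 3 3*r*w 1*w 1*w 1*w 3*w 3*w 3 + (-2)*DD 1 3*r*w 1*w 3 + (1)*DD 2 2*Hh 1 1*r*w 1*w 1*w 2*w 2 + (-1)*DD 2 2*Hh 1 1*r*w 1*w 1*w 2*w 2*w 3*w 3 + (-1)*DD 2 2*Hh 1 1*r*w 1*w 1*w 2*w 2*w 2*w 2 + (-1)*DD 2 2*Hh 1 1*r*w 1*w 1*w 1*w 1*w 2*w 2 + (-2)*DD 2 2*Hh 1 2*r*w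 1*w 2 + (2)*DD 2 2*Hh 1 2*r*w 1*w 2*w 2*w 2 + (-2)*DD 2 2*Hh 1 2*r*w 1*w 2*w 2*w 2*w 3*w 3 + (-2)*DD 2 2*Hh 1 2*r*w 1*w 2*w 2*w 2*w 2*w 2 + (-2)*DD 2 2*Hh 1 2*r*w 1*w 1*w 1*w 2*w 2*w 2 + (2)*DD 2 2*Hh 1 3*r*w 1*w 2*w 2*w 3 + (-2)*DD 2 2*Hh 1 3*r*w 1*w 2*w 2*w 3*w 3*w 3 + (-2)*DD 2 2*Hh 1 3*r*w 1*w 2*w 2*w 2*w 2*w 3 + (-2)*DD 2 2*Hh 1 3*r*w 1*w 1*w 1*w 2*w 2*w 3 + (-1)*DD 2 2*Hh 2 2*r*w 1*w 1*w 2*w 2*w 2*w 2 + (-2)*DD 2 2*Hh 2 2*r*w 2*w 2 + (1)*DD 2 2*Hh 2 2*r*w 2*w 2*w 2*w 2 + (-1)*DD 2 2*Hh 2 2*r*w 2*w 2*w 2*w 2*w 3*w 3 + (-1)*DD 2 2*Hh 2 2*r*w 2*w 2*w 2*w 2*w 2*w 2 + (-2)*DD 2 2*Hh 2 3*r*w 1*w 1*w 2*w 2*w 2*w 3 + (-2)*DD 2 2*Hh 2 3*r*w 2*w 3 + (2)*DD 2 2*Hh 2 3*r*w 2*w 2*w 2*w 3 + (-2)*DD 2 2*Hh 2 3*r*w 2*w 2*w 2*w 3*w 3*w 3 + (-2)*DD 2 2*Hh 2 3*r*w 2*w 2*w 2*w 2*w 2*w 3 + (-1)*DD 2 2*Hh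 3 3*r*w 1*w 1*w 2*w 2*w 3*w 3 + (1)*DD 2 2*Hh 3 3*r*w 2*w 2*w 3*w 3 + (-1)*DD 2 2*Hh 3 3*r*w 2*w 2*w 3*w 3*w 3*w 3 + (-1)*DD 2 2*Hh 3 3*r*w 2*w 2*w 2*w 2*w 3*w 3 + (-1)*DD 2 2*r*w 2*w 2 + (2)*DD 2 3*Hh 1 1*r*w 1*w 1*w 2*w 3 + (-2)*DD 2 3*Hh 1 1*r*w 1*w 1*w 2*w 3*w 3*w 3 + (-2)*DD 2 3*Hh 1 1*r*w 1*w 1*w 2*w 2*w 2*w 3 + (-2)*DD 2 3*Hh 1 1*r*w 1*w 1*w 1*w 1*w 2*w 3 + (4)*DD 2 3*Hh 1 2*r*w 1*w 2*w 2*w 3 + (-4)*DD 2 3*Hh 1 2*r*w 1*w 2*w 2*w 3*w 3*w 3 + (-4)*DD 2 3*Hh 1 2*r*w 1*w 2*w 2*w 2*w 2*w 3 + (-2)*DD 2 3*Hh 1 2*r*w 1*w 3 + (-4)*DD 2 3*Hh 1 2*r*w 1*w 1*w 1*w 2*w 2*w 3 + (-2)*DD 2 3*Hh 1 3*r*w 1*w 2 + (4)*DD 2 3*Hh 1 3*r*w 1*w 2*w 3*w 3 + (-4)*DD 2 3*Hh 1 3*r*w 1*w 2*w 3*w 3*w 3*w 3 + (-4)*DD 2 3*Hh 1 3*r*w 1*w 2*w 2*w 2*w 3*w 3 + (-4)*DD 2 3*Hh 1 3*r*w 1*w 1*w 1*w 2*w 3*w 3 + (-2)*DD 2 3*Hh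 2 2*r*w 1*w 1*w 2*w 2*w 2*w 3 + (-2)*DD 2 3*Hh 2 2*r*w 2*w 3 + (2)*DD 2 3*Hh 2 2*r*w 2*w 2*w 2*w 3 + (-2)*DD 2 3*Hh 2 2*r*w 2*w 2*w 2*w 3*w 3*w 3 + (-2)*DD 2 3*Hh 2 2*r*w 2*w 2*w 2*w 2*w 2*w 3 + (-4)*DD 2 3*Hh 2 3*r*w 1*w 1*w 2*w 2*w 3*w 3 + (-2)*DD 2 3*Hh 2 3*r*w 2*w 2 + (4)*DD 2 3*Hh 2 3*r*w 2*w 2*w 3*w 3 + (-4)*DD 2 3*Hh 2 3*r*w 2*w 2*w 3*w 3*w 3*w 3 + (-4)*DD 2 3*Hh 2 3*r*w 2*w 2*w 2*w 2*w 3*w 3 + (-2)*DD 2 3*Hh 2 3*r*w 3*w 3 + (-2)*DD 2 3*Hh 3 3*r*w 1*w 1*w 2*w 3*w 3*w 3 + (-2)*DD 2 3*Hh 3 3*r*w 2*w 3 + (2)*DD 2 3*Hh 3 3*r*w 2*w 3*w 3*w 3 + (-2)*DD 2 3*Hh 3 3*r*w 2*w 3*w 3*w 3*w 3*w 3 + (-2)*DD 2 3*Hh 3 3*r*w 2*w 2*w 2*w 3*w 3*w 3 + (-2)*DD 2 3*r*w 2*w 3 + (-1)*DD 3 3*Hh 1 1*r*w 1*w 1*w 2*w 2*w 3*w 3 + (1)*DD 3 3*Hh 1 1*r*w 1*w 1*w 3*w 3 + (-1)*DD 3 3*Hh 1 1*r*w 1*w 1*w 3*w 3*w 3*w 3 +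 (-1)*DD 3 3*Hh 1 1*r*w 1*w 1*w 1*w 1*w 3*w 3 + (2)*DD 3 3*Hh 1 2*r*w 1*w 2*w 3*w 3 + (-2)*DD 3 3*Hh 1 2*r*w 1*w 2*w 3*w 3*w 3*w 3 + (-2)*DD 3 3*Hh 1 2*r*w 1*w 2*w 2*w 2*w 3*w 3 + (-2)*DD 3 3*Hh 1 2*r*w 1*w 1*w 1*w 2*w 3*w 3 + (-2)*DD 3 3*Hh 1 3*r*w 1*w 2*w 2*w 3*w 3*w 3 + (-2)*DD 3 3*Hh 1 3*r*w 1*w 3 + (2)*DD 3 3*Hh 1 3*r*w 1*w 3*w 3*w 3 + (-2)*DD 3 3*Hh 1 3*r*w 1*w 3*w 3*w 3*w 3*w 3 + (-2)*DD 3 3*Hh 1 3*r*w 1*w 1*w 1*w 3*w 3*w 3 + (-1)*DD 3 3*Hh 2 2*r*w 1*w 1*w 2*w 2*w 3*w 3 + (1)*DD 3 3*Hh 2 2*r*w 2*w 2*w 3*w 3 + (-1)*DD 3 3*Hh 2 2*r*w 2*w 2*w 3*w 3*w 3*w 3 + (-1)*DD 3 3*Hh 2 2*r*w 2*w 2*w 2*w 2*w 3*w 3 + (-2)*DD 3 3*Hh 2 3*r*w 1*w 1*w 2*w 3*w 3*w 3 + (-2)*DD 3 3*Hh 2 3*r*w 2*w 3 + (2)*DD 3 3*Hh 2 3*r*w 2*w 3*w 3*w 3 + (-2)*DD 3 3*Hh 2 3*r*w 2*w 3*w 3*w 3*w 3*w 3 + (-2)*DD 3 3*Hh 2 3*r*w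 2*w 2*w 2*w 3*w 3*w 3 + (-1)*DD 3 3*Hh 3 3*r*w 1*w 1*w 3*w 3*w 3*w 3 + (-1)*DD 3 3*Hh 3 3*r*w 2*w 2*w 3*w 3*w 3*w 3 + (-2)*DD 3 3*Hh 3 3*r*w 3*w 3 + (1)*DD 3 3*Hh 3 3*r*w 3*w 3*w 3*w 3 + (-1)*DD 3 3*Hh 3 3*r*w 3*w 3*w 3*w 3*w 3*w 3 + (-1)*DD 3 3*r*w 3*w 3 + (-1/2)*Hh 0 0*ir*ph + (-1/2)*Hh 0 0*ir*ph*w 1*w 1 + (-1/2)*Hh 0 0*ir*ph*w 2*w 2 + (-1/2)*Hh 0 0*ir*ph*w 3*w 3 + (-1)*Hh 0 1*ir*ph*w 1*w 2*w 2 + (-1)*Hh 0 1*ir*ph*w 1*w 3*w 3 + (-1)*Hh 0 1*ir*ph*w 1*w 1*w 1 + (-1)*Hh 0 2*ir*ph*w 1*w 1*w 2 + (-1)*Hh 0 2*ir*ph*w 2*w 3*w 3 + (-1)*Hh 0 2*ir*ph*w 2*w 2*w 2 + (-1)*Hh 0 3*ir*ph*w 1*w 1*w 3 + (-1)*Hh 0 3*ir*ph*w 2*w 2*w 3 + (-1)*Hh 0 3*ir*ph*w 3*w 3*w 3 + (-1/2)*Hh 1 1*ir*ph + (1)*Hh 1 1*ir*ph*w 1*w 1 + (3/2)*Hh 1 1*ir*ph*w 1*w 1*w 2*w 2 + (3/2)*Hh 1 1*ir*ph*w 1*w 1*w 3*w 3 + (3/2)*Hh 1 1*ir*ph*w 1*w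 1*w 1*w 1 + (2)*Hh 1 2*ir*ph*w 1*w 2 + (3)*Hh 1 2*ir*ph*w 1*w 2*w 3*w 3 + (3)*Hh 1 2*ir*ph*w 1*w 2*w 2*w 2 + (3)*Hh 1 2*ir*ph*w 1*w 1*w 1*w 2 + (3)*Hh 1 3*ir*ph*w 1*w 2*w 2*w 3 + (2)*Hh 1 3*ir*ph*w 1*w 3 + (3)*Hh 1 3*ir*ph*w 1*w 3*w 3*w 3 + (3)*Hh 1 3*ir*ph*w 1*w 1*w 1*w 3 + (-1/2)*Hh 2 2*ir*ph + (3/2)*Hh 2 2*ir*ph*w 1*w 1*w 2*w 2 + (1)*Hh 2 2*ir*ph*w 2*w 2 + (3/2)*Hh 2 2*ir*ph*w 2*w 2*w 3*w 3 + (3/2)*Hh 2 2*ir*ph*w 2*w 2*w 2*w 2 + (3)*Hh 2 3*ir*ph*w 1*w 1*w 2*w 3 + (2)*Hh 2 3*ir*ph*w 2*w 3 + (3)*Hh 2 3*ir*ph*w 2*w 3*w 3*w 3 + (3)*Hh 2 3*ir*ph*w 2*w 2*w 2*w 3 + (-1/2)*Hh 3 3*ir*ph + (3/2)*Hh 3 3*ir*ph*w 1*w 1*w 3*w 3 + (3/2)*Hh 3 3*ir*ph*w 2*w 2*w 3*w 3 + (1)*Hh 3 3*ir*ph*w 3*w 3 + (3/2)*Hh 3 3*ir*ph*w 3*w 3*w 3*w 3 + (2)*ir*ph*w 1*w 1 + (2)*ir*ph*w 2*w 2 + (2)*ir*ph*w 3*w 3) * (w 1 * w 1 + w 2 * w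 2 + w 3 * w 3 - 1) + ((1/2)*D 0*Hh 0 0 + (1/2)*D 0*Hh 1 1 + (-1)*D 0*Hh 1 1*w 1*w 1 + (-2)*D 0*Hh 1 2*w 1*w 2 + (-2)*D 0*Hh 1 3*w 1*w 3 + (1/2)*D 0*Hh 2 2 + (-1)*D 0*Hh 2 2*w 2*w 2 + (-2)*D 0*Hh 2 3*w 2*w 3 + (1/2)*D 0*Hh 3 3 + (-1)*D 0*Hh 3 3*w 3*w 3 + (-1/2)*D 1*Hh 0 0*w 1 + (2)*D 1*Hh 0 1*w 1*w 1 + (-4)*D 1*Hh 0 1*w 1*w 1*w 2*w 2 + (4)*D 1*Hh 0 1*w 1*w 1*w 2*w 2*w 3*w 3 + (2)*D 1*Hh 0 1*w 1*w 1*w 2*w 2*w 2*w 2 + (-4)*D 1*Hh 0 1*w 1*w 1*w 3*w 3 + (2)*D 1*Hh 0 1*w 1*w 1*w 3*w 3*w 3*w 3 + (-4)*D 1*Hh 0 1*w 1*w 1*w 1*w 1 + (4)*D 1*Hh 0 1*w 1*w 1*w 1*w 1*w 2*w 2 + (4)*D 1*Hh 0 1*w 1*w 1*w 1*w 1*w 3*w 3 + (2)*D 1*Hh 0 1*w 1*w 1*w 1*w 1*w 1*w 1 + (2)*D 1*Hh 0 2*w 1*w 2 + (-4)*D 1*Hh 0 2*w 1*w 2*w 3*w 3 + (2)*D 1*Hh 0 2*w 1*w 2*w 3*w 3*w 3*w 3 + (-4)*D 1*Hh 0 2*w 1*w 2*w 2*w 2 + (4)*D 1*Hh 0 2*w 1*w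 2*w 2*w 2*w 3*w 3 + (2)*D 1*Hh 0 2*w 1*w 2*w 2*w 2*w 2*w 2 + (-4)*D 1*Hh 0 2*w 1*w 1*w 1*w 2 + (4)*D 1*Hh 0 2*w 1*w 1*w 1*w 2*w 3*w 3 + (4)*D 1*Hh 0 2*w 1*w 1*w 1*w 2*w 2*w 2 + (2)*D 1*Hh 0 2*w 1*w 1*w 1*w 1*w 1*w 2 + (-4)*D 1*Hh 0 3*w 1*w 2*w 2*w 3 + (4)*D 1*Hh 0 3*w 1*w 2*w 2*w 3*w 3*w 3 + (2)*D 1*Hh 0 3*w 1*w 2*w 2*w 2*w 2*w 3 + (2)*D 1*Hh 0 3*w 1*w 3 + (-4)*D 1*Hh 0 3*w 1*w 3*w 3*w 3 + (2)*D 1*Hh 0 3*w 1*w 3*w 3*w 3*w 3*w 3 + (4)*D 1*Hh 0 3*w 1*w 1*w 1*w 2*w 2*w 3 + (-4)*D 1*Hh 0 3*w 1*w 1*w 1*w 3 + (4)*D 1*Hh 0 3*w 1*w 1*w 1*w 3*w 3*w 3 + (2)*D 1*Hh 0 3*w 1*w 1*w 1*w 1*w 1*w 3 + (3/2)*D 1*Hh 1 1*w 1 + (-1)*D 1*Hh 1 1*w 1*w 2*w 2 + (-1)*D 1*Hh 1 1*w 1*w 3*w 3 + (-6)*D 1*Hh 1 1*w 1*w 1*w 1 + (9)*D 1*Hh 1 1*w 1*w 1*w 1*w 2*w 2 + (-12)*D 1*Hh 1 1*w 1*w 1*w 1*w 2*w 2*w 3*w 3 + (6)*D 1*Hh 1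 1*w 1*w 1*w 1*w 2*w 2*w 3*w 3*w 3*w 3 + (-6)*D 1*Hh 1 1*w 1*w 1*w 1*w 2*w 2*w 2*w 2 + (6)*D 1*Hh 1 1*w 1*w 1*w 1*w 2*w 2*w 2*w 2*w 3*w 3 + (2)*D 1*Hh 1 1*w 1*w 1*w 1*w 2*w 2*w 2*w 2*w 2*w 2 + (9)*D 1*Hh 1 1*w 1*w 1*w 1*w 3*w 3 + (-6)*D 1*Hh 1 1*w 1*w 1*w 1*w 3*w 3*w 3*w 3 + (2)*D 1*Hh 1 1*w 1*w 1*w 1*w 3*w 3*w 3*w 3*w 3*w 3 + (9)*D 1*Hh 1 1*w 1*w 1*w 1*w 1*w 1 + (-12)*D 1*Hh 1 1*w 1*w 1*w 1*w 1*w 1*w 2*w 2 + (12)*D 1*Hh 1 1*w 1*w 1*w 1*w 1*w 1*w 2*w 2*w 3*w 3 + (6)*D 1*Hh 1 1*w 1*w 1*w 1*w 1*w 1*w 2*w 2*w 2*w 2 + (-12)*D 1*Hh 1 1*w 1*w 1*w 1*w 1*w 1*w 3*w 3 + (6)*D 1*Hh 1 1*w 1*w 1*w 1*w 1*w 1*w 3*w 3*w 3*w 3 + (-6)*D 1*Hh 1 1*w 1*w 1*w 1*w 1*w 1*w 1*w 1 + (6)*D 1*Hh 1 1*w 1*w 1*w 1*w 1*w 1*w 1*w 1*w 2*w 2 + (6)*D 1*Hh 1 1*w 1*w 1*w 1*w 1*w 1*w 1*w 1*w 3*w 3 + (2)*D 1*Hh 1 1*w 1*w 1*w 1*w 1*w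 1*w 1*w 1*w 1*w 1 + (-11)*D 1*Hh 1 2*w 1*w 1*w 2 + (18)*D 1*Hh 1 2*w 1*w 1*w 2*w 3*w 3 + (-12)*D 1*Hh 1 2*w 1*w 1*w 2*w 3*w 3*w 3*w 3 + (4)*D 1*Hh 1 2*w 1*w 1*w 2*w 3*w 3*w 3*w 3*w 3*w 3 + (18)*D 1*Hh 1 2*w 1*w 1*w 2*w 2*w 2 + (-24)*D 1*Hh 1 2*w 1*w 1*w 2*w 2*w 2*w 3*w 3 + (12)*D 1*Hh 1 2*w 1*w 1*w 2*w 2*w 2*w 3*w 3*w 3*w 3 + (-12)*D 1*Hh 1 2*w 1*w 1*w 2*w 2*w 2*w 2*w 2 + (12)*D 1*Hh 1 2*w 1*w 1*w 2*w 2*w 2*w 2*w 2*w 3*w 3 + (4)*D 1*Hh 1 2*w 1*w 1*w 2*w 2*w 2*w 2*w 2*w 2*w 2 + (18)*D 1*Hh 1 2*w 1*w 1*w 1*w 1*w 2 + (-24)*D 1*Hh 1 2*w 1*w 1*w 1*w 1*w 2*w 3*w 3 + (12)*D 1*Hh 1 2*w 1*w 1*w 1*w 1*w 2*w 3*w 3*w 3*w 3 + (-24)*D 1*Hh 1 2*w 1*w 1*w 1*w 1*w 2*w 2*w 2 + (24)*D 1*Hh 1 2*w 1*w 1*w 1*w 1*w 2*w 2*w 2*w 3*w 3 + (12)*D 1*Hh 1 2*w 1*w 1*w 1*w 1*w 2*w 2*w 2*w 2*w 2 + (-12)*D 1*Hh 1 2*w 1*w 1*w 1*w 1*w 1*w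 1*w 2 + (12)*D 1*Hh 1 2*w 1*w 1*w 1*w 1*w 1*w 1*w 2*w 3*w 3 + (12)*D 1*Hh 1 2*w 1*w 1*w 1*w 1*w 1*w 1*w 2*w 2*w 2 + (4)*D 1*Hh 1 2*w 1*w 1*w 1*w 1*w 1*w 1*w 1*w 1*w 2 + (1)*D 1*Hh 1 2*w 2 + (-1)*D 1*Hh 1 2*w 2*w 3*w 3 + (-1)*D 1*Hh 1 2*w 2*w 2*w 2 + (18)*D 1*Hh 1 3*w 1*w 1*w 2*w 2*w 3 + (-24)*D 1*Hh 1 3*w 1*w 1*w 2*w 2*w 3*w 3*w 3 + (12)*D 1*Hh 1 3*w 1*w 1*w 2*w 2*w 3*w 3*w 3*w 3*w 3 + (-12)*D 1*Hh 1 3*w 1*w 1*w 2*w 2*w 2*w 2*w 3 + (12)*D 1*Hh 1 3*w 1*w 1*w 2*w 2*w 2*w 2*w 3*w 3*w 3 + (4)*D 1*Hh 1 3*w 1*w 1*w 2*w 2*w 2*w 2*w 2*w 2*w 3 + (-11)*D 1*Hh 1 3*w 1*w 1*w 3 + (18)*D 1*Hh 1 3*w 1*w 1*w 3*w 3*w 3 + (-12)*D 1*Hh 1 3*w 1*w 1*w 3*w 3*w 3*w 3*w 3 + (4)*D 1*Hh 1 3*w 1*w 1*w 3*w 3*w 3*w 3*w 3*w 3*w 3 + (-24)*D 1*Hh 1 3*w 1*w 1*w 1*w 1*w 2*w 2*w 3 + (24)*D 1*Hh 1 3*w 1*w 1*w 1*w 1*w 2*w 2*w 3*w 3*w 3 +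 (12)*D 1*Hh 1 3*w 1*w 1*w 1*w 1*w 2*w 2*w 2*w 2*w 3 + (18)*D 1*Hh 1 3*w 1*w 1*w 1*w 1*w 3 + (-24)*D 1*Hh 1 3*w 1*w 1*w 1*w 1*w 3*w 3*w 3 + (12)*D 1*Hh 1 3*w 1*w 1*w 1*w 1*w 3*w 3*w 3*w 3*w 3 + (12)*D 1*Hh 1 3*w 1*w 1*w 1*w 1*w 1*w 1*w 2*w 2*w 3 + (-12)*D 1*Hh 1 3*w 1*w 1*w 1*w 1*w 1*w 1*w 3 + (12)*D 1*Hh 1 3*w 1*w 1*w 1*w 1*w 1*w 1*w 3*w 3*w 3 + (4)*D 1*Hh 1 3*w 1*w 1*w 1*w 1*w 1*w 1*w 1*w 1*w 3 + (-1)*D 1*Hh 1 3*w 2*w 2*w 3 + (1)*D 1*Hh 1 3*w 3 + (-1)*D 1*Hh 1 3*w 3*w 3*w 3 + (1/2)*D 1*Hh 2 2*w 1 + (-5)*D 1*Hh 2 2*w 1*w 2*w 2 + (9)*D 1*Hh 2 2*w 1*w 2*w 2*w 3*w 3 + (-6)*D 1*Hh 2 2*w 1*w 2*w 2*w 3*w 3*w 3*w 3 + (2)*D 1*Hh 2 2*w 1*w 2*w 2*w 3*w 3*w 3*w 3*w 3*w 3 + (9)*D 1*Hh 2 2*w 1*w 2*w 2*w 2*w 2 + (-12)*D 1*Hh 2 2*w 1*w 2*w 2*w 2*w 2*w 3*w 3 + (6)*D 1*Hh 2 2*w 1*w 2*w 2*w 2*w 2*w 3*w 3*w 3*w 3 +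 (-6)*D 1*Hh 2 2*w 1*w 2*w 2*w 2*w 2*w 2*w 2 + (6)*D 1*Hh 2 2*w 1*w 2*w 2*w 2*w 2*w 2*w 2*w 3*w 3 + (2)*D 1*Hh 2 2*w 1*w 2*w 2*w 2*w 2*w 2*w 2*w 2*w 2 + (9)*D 1*Hh 2 2*w 1*w 1*w 1*w 2*w 2 + (-12)*D 1*Hh 2 2*w 1*w 1*w 1*w 2*w 2*w 3*w 3 + (6)*D 1*Hh 2 2*w 1*w 1*w 1*w 2*w 2*w 3*w 3*w 3*w 3 + (-12)*D 1*Hh 2 2*w 1*w 1*w 1*w 2*w 2*w 2*w 2 + (12)*D 1*Hh 2 2*w 1*w 1*w 1*w 2*w 2*w 2*w 2*w 3*w 3 + (6)*D 1*Hh 2 2*w 1*w 1*w 1*w 2*w 2*w 2*w 2*w 2*w 2 + (-6)*D 1*Hh 2 2*w 1*w 1*w 1*w 1*w 1*w 2*w 2 + (6)*D 1*Hh 2 2*w 1*w 1*w 1*w 1*w 1*w 2*w 2*w 3*w 3 + (6)*D 1*Hh 2 2*w 1*w 1*w 1*w 1*w 1*w 2*w 2*w 2*w 2 + (2)*D 1*Hh 2 2*w 1*w 1*w 1*w 1*w 1*w 1*w 1*w 2*w 2 + (-10)*D 1*Hh 2 3*w 1*w 2*w 3 + (18)*D 1*Hh 2 3*w 1*w 2*w 3*w 3*w 3 + (-12)*D 1*Hh 2 3*w 1*w 2*w 3*w 3*w 3*w 3*w 3 + (4)*D 1*Hh 2 3*w 1*w 2*w 3*w 3*w 3*w 3*w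 3*w 3*w 3 + (18)*D 1*Hh 2 3*w 1*w 2*w 2*w 2*w 3 + (-24)*D 1*Hh 2 3*w 1*w 2*w 2*w 2*w 3*w 3*w 3 + (12)*D 1*Hh 2 3*w 1*w 2*w 2*w 2*w 3*w 3*w 3*w 3*w 3 + (-12)*D 1*Hh 2 3*w 1*w 2*w 2*w 2*w 2*w 2*w 3 + (12)*D 1*Hh 2 3*w 1*w 2*w 2*w 2*w 2*w 2*w 3*w 3*w 3 + (4)*D 1*Hh 2 3*w 1*w 2*w 2*w 2*w 2*w 2*w 2*w 2*w 3 + (18)*D 1*Hh 2 3*w 1*w 1*w 1*w 2*w 3 + (-24)*D 1*Hh 2 3*w 1*w 1*w 1*w 2*w 3*w 3*w 3 + (12)*D 1*Hh 2 3*w 1*w 1*w 1*w 2*w 3*w 3*w 3*w 3*w 3 + (-24)*D 1*Hh 2 3*w 1*w 1*w 1*w 2*w 2*w 2*w 3 + (24)*D 1*Hh 2 3*w 1*w 1*w 1*w 2*w 2*w 2*w 3*w 3*w 3 + (12)*D 1*Hh 2 3*w 1*w 1*w 1*w 2*w 2*w 2*w 2*w 2*w 3 + (-12)*D 1*Hh 2 3*w 1*w 1*w 1*w 1*w 1*w 2*w 3 + (12)*D 1*Hh 2 3*w 1*w 1*w 1*w 1*w 1*w 2*w 3*w 3*w 3 + (12)*D 1*Hh 2 3*w 1*w 1*w 1*w 1*w 1*w 2*w 2*w 2*w 3 + (4)*D 1*Hh 2 3*w 1*w 1*w 1*w 1*w 1*w 1*w 1*w 2*w 3 + (1/2)*D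 1*Hh 3 3*w 1 + (9)*D 1*Hh 3 3*w 1*w 2*w 2*w 3*w 3 + (-12)*D 1*Hh 3 3*w 1*w 2*w 2*w 3*w 3*w 3*w 3 + (6)*D 1*Hh 3 3*w 1*w 2*w 2*w 3*w 3*w 3*w 3*w 3*w 3 + (-6)*D 1*Hh 3 3*w 1*w 2*w 2*w 2*w 2*w 3*w 3 + (6)*D 1*Hh 3 3*w 1*w 2*w 2*w 2*w 2*w 3*w 3*w 3*w 3 + (2)*D 1*Hh 3 3*w 1*w 2*w 2*w 2*w 2*w 2*w 2*w 3*w 3 + (-5)*D 1*Hh 3 3*w 1*w 3*w 3 + (9)*D 1*Hh 3 3*w 1*w 3*w 3*w 3*w 3 + (-6)*D 1*Hh 3 3*w 1*w 3*w 3*w 3*w 3*w 3*w 3 + (2)*D 1*Hh 3 3*w 1*w 3*w 3*w 3*w 3*w 3*w 3*w 3*w 3 + (-12)*D 1*Hh 3 3*w 1*w 1*w 1*w 2*w 2*w 3*w 3 + (12)*D 1*Hh 3 3*w 1*w 1*w 1*w 2*w 2*w 3*w 3*w 3*w 3 + (6)*D 1*Hh 3 3*w 1*w 1*w 1*w 2*w 2*w 2*w 2*w 3*w 3 + (9)*D 1*Hh 3 3*w 1*w 1*w 1*w 3*w 3 + (-12)*D 1*Hh 3 3*w 1*w 1*w 1*w 3*w 3*w 3*w 3 + (6)*D 1*Hh 3 3*w 1*w 1*w 1*w 3*w 3*w 3*w 3*w 3*w 3 + (6)*D 1*Hh 3 3*w 1*w 1*w 1*w 1*w 1*w 2*w 2*w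 3*w 3 + (-6)*D 1*Hh 3 3*w 1*w 1*w 1*w 1*w 1*w 3*w 3 + (6)*D 1*Hh 3 3*w 1*w 1*w 1*w 1*w 1*w 3*w 3*w 3*w 3 + (2)*D 1*Hh 3 3*w 1*w 1*w 1*w 1*w 1*w 1*w 1*w 3*w 3 + (3)*D 1*w 1 + (-3)*D 1*w 1*w 2*w 2 + (4)*D 1*w 1*w 2*w 2*w 3*w 3 + (2)*D 1*w 1*w 2*w 2*w 2*w 2 + (-3)*D 1*w 1*w 3*w 3 + (2)*D 1*w 1*w 3*w 3*w 3*w 3 + (-3)*D 1*w 1*w 1*w 1 + (4)*D 1*w 1*w 1*w 1*w 2*w 2 + (4)*D 1*w 1*w 1*w 1*w 3*w 3 + (2)*D 1*w 1*w 1*w 1*w 1*w 1 + (-1/2)*D 2*Hh 0 0*w 2 + (2)*D 2*Hh 0 1*w 1*w 2 + (-4)*D 2*Hh 0 1*w 1*w 2*w 3*w 3 + (2)*D 2*Hh 0 1*w 1*w 2*w 3*w 3*w 3*w 3 + (-4)*D 2*Hh 0 1*w 1*w 2*w 2*w 2 + (4)*D 2*Hh 0 1*w 1*w 2*w 2*w 2*w 3*w 3 + (2)*D 2*Hh 0 1*w 1*w 2*w 2*w 2*w 2*w 2 + (-4)*D 2*Hh 0 1*w 1*w 1*w 1*w 2 + (4)*D 2*Hh 0 1*w 1*w 1*w 1*w 2*w 3*w 3 + (4)*D 2*Hh 0 1*w 1*w 1*w 1*w 2*w 2*w 2 + (2)*D 2*Hh 0 1*w 1*w 1*w 1*w 1*w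 1*w 2 + (-4)*D 2*Hh 0 2*w 1*w 1*w 2*w 2 + (4)*D 2*Hh 0 2*w 1*w 1*w 2*w 2*w 3*w 3 + (4)*D 2*Hh 0 2*w 1*w 1*w 2*w 2*w 2*w 2 + (2)*D 2*Hh 0 2*w 1*w 1*w 1*w 1*w 2*w 2 + (2)*D 2*Hh 0 2*w 2*w 2 + (-4)*D 2*Hh 0 2*w 2*w 2*w 3*w 3 + (2)*D 2*Hh 0 2*w 2*w 2*w 3*w 3*w 3*w 3 + (-4)*D 2*Hh 0 2*w 2*w 2*w 2*w 2 + (4)*D 2*Hh 0 2*w 2*w 2*w 2*w 2*w 3*w 3 + (2)*D 2*Hh 0 2*w 2*w 2*w 2*w 2*w 2*w 2 + (-4)*D 2*Hh 0 3*w 1*w 1*w 2*w 3 + (4)*D 2*Hh 0 3*w 1*w 1*w 2*w 3*w 3*w 3 + (4)*D 2*Hh 0 3*w 1*w 1*w 2*w 2*w 2*w 3 + (2)*D 2*Hh 0 3*w 1*w 1*w 1*w 1*w 2*w 3 + (2)*D 2*Hh 0 3*w 2*w 3 + (-4)*D 2*Hh 0 3*w 2*w 3*w 3*w 3 + (2)*D 2*Hh 0 3*w 2*w 3*w 3*w 3*w 3*w 3 + (-4)*D 2*Hh 0 3*w 2*w 2*w 2*w 3 + (4)*D 2*Hh 0 3*w 2*w 2*w 2*w 3*w 3*w 3 + (2)*D 2*Hh 0 3*w 2*w 2*w 2*w 2*w 2*w 3 + (-5)*D 2*Hh 1 1*w 1*w 1*w 2 + (9)*D 2*Hh 1 1*w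 1*w 1*w 2*w 3*w 3 + (-6)*D 2*Hh 1 1*w 1*w 1*w 2*w 3*w 3*w 3*w 3 + (2)*D 2*Hh 1 1*w 1*w 1*w 2*w 3*w 3*w 3*w 3*w 3*w 3 + (9)*D 2*Hh 1 1*w 1*w 1*w 2*w 2*w 2 + (-12)*D 2*Hh 1 1*w 1*w 1*w 2*w 2*w 2*w 3*w 3 + (6)*D 2*Hh 1 1*w 1*w 1*w 2*w 2*w 2*w 3*w 3*w 3*w 3 + (-6)*D 2*Hh 1 1*w 1*w 1*w 2*w 2*w 2*w 2*w 2 + (6)*D 2*Hh 1 1*w 1*w 1*w 2*w 2*w 2*w 2*w 2*w 3*w 3 + (2)*D 2*Hh 1 1*w 1*w 1*w 2*w 2*w 2*w 2*w 2*w 2*w 2 + (9)*D 2*Hh 1 1*w 1*w 1*w 1*w 1*w 2 + (-12)*D 2*Hh 1 1*w 1*w 1*w 1*w 1*w 2*w 3*w 3 + (6)*D 2*Hh 1 1*w 1*w 1*w 1*w 1*w 2*w 3*w 3*w 3*w 3 + (-12)*D 2*Hh 1 1*w 1*w 1*w 1*w 1*w 2*w 2*w 2 + (12)*D 2*Hh 1 1*w 1*w 1*w 1*w 1*w 2*w 2*w 2*w 3*w 3 + (6)*D 2*Hh 1 1*w 1*w 1*w 1*w 1*w 2*w 2*w 2*w 2*w 2 + (-6)*D 2*Hh 1 1*w 1*w 1*w 1*w 1*w 1*w 1*w 2 + (6)*D 2*Hh 1 1*w 1*w 1*w 1*w 1*w 1*w 1*w 2*w 3*w 3 + (6)*D 2*Hh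 1 1*w 1*w 1*w 1*w 1*w 1*w 1*w 2*w 2*w 2 + (2)*D 2*Hh 1 1*w 1*w 1*w 1*w 1*w 1*w 1*w 1*w 1*w 2 + (1/2)*D 2*Hh 1 1*w 2 + (1)*D 2*Hh 1 2*w 1 + (-11)*D 2*Hh 1 2*w 1*w 2*w 2 + (18)*D 2*Hh 1 2*w 1*w 2*w 2*w 3*w 3 + (-12)*D 2*Hh 1 2*w 1*w 2*w 2*w 3*w 3*w 3*w 3 + (4)*D 2*Hh 1 2*w 1*w 2*w 2*w 3*w 3*w 3*w 3*w 3*w 3 + (18)*D 2*Hh 1 2*w 1*w 2*w 2*w 2*w 2 + (-24)*D 2*Hh 1 2*w 1*w 2*w 2*w 2*w 2*w 3*w 3 + (12)*D 2*Hh 1 2*w 1*w 2*w 2*w 2*w 2*w 3*w 3*w 3*w 3 + (-12)*D 2*Hh 1 2*w 1*w 2*w 2*w 2*w 2*w 2*w 2 + (12)*D 2*Hh 1 2*w 1*w 2*w 2*w 2*w 2*w 2*w 2*w 3*w 3 + (4)*D 2*Hh 1 2*w 1*w 2*w 2*w 2*w 2*w 2*w 2*w 2*w 2 + (-1)*D 2*Hh 1 2*w 1*w 3*w 3 + (-1)*D 2*Hh 1 2*w 1*w 1*w 1 + (18)*D 2*Hh 1 2*w 1*w 1*w 1*w 2*w 2 + (-24)*D 2*Hh 1 2*w 1*w 1*w 1*w 2*w 2*w 3*w 3 + (12)*D 2*Hh 1 2*w 1*w 1*w 1*w 2*w 2*w 3*w 3*w 3*w 3 + (-24)*D 2*Hh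 1 2*w 1*w 1*w 1*w 2*w 2*w 2*w 2 + (24)*D 2*Hh 1 2*w 1*w 1*w 1*w 2*w 2*w 2*w 2*w 3*w 3 + (12)*D 2*Hh 1 2*w 1*w 1*w 1*w 2*w 2*w 2*w 2*w 2*w 2 + (-12)*D 2*Hh 1 2*w 1*w 1*w 1*w 1*w 1*w 2*w 2 + (12)*D 2*Hh 1 2*w 1*w 1*w 1*w 1*w 1*w 2*w 2*w 3*w 3 + (12)*D 2*Hh 1 2*w 1*w 1*w 1*w 1*w 1*w 2*w 2*w 2*w 2 + (4)*D 2*Hh 1 2*w 1*w 1*w 1*w 1*w 1*w 1*w 1*w 2*w 2 + (-10)*D 2*Hh 1 3*w 1*w 2*w 3 + (18)*D 2*Hh 1 3*w 1*w 2*w 3*w 3*w 3 + (-12)*D 2*Hh 1 3*w 1*w 2*w 3*w 3*w 3*w 3*w 3 + (4)*D 2*Hh 1 3*w 1*w 2*w 3*w 3*w 3*w 3*w 3*w 3*w 3 + (18)*D 2*Hh 1 3*w 1*w 2*w 2*w 2*w 3 + (-24)*D 2*Hh 1 3*w 1*w 2*w 2*w 2*w 3*w 3*w 3 + (12)*D 2*Hh 1 3*w 1*w 2*w 2*w 2*w 3*w 3*w 3*w 3*w 3 + (-12)*D 2*Hh 1 3*w 1*w 2*w 2*w 2*w 2*w 2*w 3 + (12)*D 2*Hh 1 3*w 1*w 2*w 2*w 2*w 2*w 2*w 3*w 3*w 3 + (4)*D 2*Hh 1 3*w 1*w 2*w 2*w 2*w 2*w 2*w 2*w 2*w 3 + (18)*D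 2*Hh 1 3*w 1*w 1*w 1*w 2*w 3 + (-24)*D 2*Hh 1 3*w 1*w 1*w 1*w 2*w 3*w 3*w 3 + (12)*D 2*Hh 1 3*w 1*w 1*w 1*w 2*w 3*w 3*w 3*w 3*w 3 + (-24)*D 2*Hh 1 3*w 1*w 1*w 1*w 2*w 2*w 2*w 3 + (24)*D 2*Hh 1 3*w 1*w 1*w 1*w 2*w 2*w 2*w 3*w 3*w 3 + (12)*D 2*Hh 1 3*w 1*w 1*w 1*w 2*w 2*w 2*w 2*w 2*w 3 + (-12)*D 2*Hh 1 3*w 1*w 1*w 1*w 1*w 1*w 2*w 3 + (12)*D 2*Hh 1 3*w 1*w 1*w 1*w 1*w 1*w 2*w 3*w 3*w 3 + (12)*D 2*Hh 1 3*w 1*w 1*w 1*w 1*w 1*w 2*w 2*w 2*w 3 + (4)*D 2*Hh 1 3*w 1*w 1*w 1*w 1*w 1*w 1*w 1*w 2*w 3 + (-1)*D 2*Hh 2 2*w 1*w 1*w 2 + (9)*D 2*Hh 2 2*w 1*w 1*w 2*w 2*w 2 + (-12)*D 2*Hh 2 2*w 1*w 1*w 2*w 2*w 2*w 3*w 3 + (6)*D 2*Hh 2 2*w 1*w 1*w 2*w 2*w 2*w 3*w 3*w 3*w 3 + (-12)*D 2*Hh 2 2*w 1*w 1*w 2*w 2*w 2*w 2*w 2 + (12)*D 2*Hh 2 2*w 1*w 1*w 2*w 2*w 2*w 2*w 2*w 3*w 3 + (6)*D 2*Hh 2 2*w 1*w 1*w 2*w 2*w 2*w 2*w 2*w 2*w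 2 + (-6)*D 2*Hh 2 2*w 1*w 1*w 1*w 1*w 2*w 2*w 2 + (6)*D 2*Hh 2 2*w 1*w 1*w 1*w 1*w 2*w 2*w 2*w 3*w 3 + (6)*D 2*Hh 2 2*w 1*w 1*w 1*w 1*w 2*w 2*w 2*w 2*w 2 + (2)*D 2*Hh 2 2*w 1*w 1*w 1*w 1*w 1*w 1*w 2*w 2*w 2 + (3/2)*D 2*Hh 2 2*w 2 + (-1)*D 2*Hh 2 2*w 2*w 3*w 3 + (-6)*D 2*Hh 2 2*w 2*w 2*w 2 + (9)*D 2*Hh 2 2*w 2*w 2*w 2*w 3*w 3 + (-6)*D 2*Hh 2 2*w 2*w 2*w 2*w 3*w 3*w 3*w 3 + (2)*D 2*Hh 2 2*w 2*w 2*w 2*w 3*w 3*w 3*w 3*w 3*w 3 + (9)*D 2*Hh 2 2*w 2*w 2*w 2*w 2*w 2 + (-12)*D 2*Hh 2 2*w 2*w 2*w 2*w 2*w 2*w 3*w 3 + (6)*D 2*Hh 2 2*w 2*w 2*w 2*w 2*w 2*w 3*w 3*w 3*w 3 + (-6)*D 2*Hh 2 2*w 2*w 2*w 2*w 2*w 2*w 2*w 2 + (6)*D 2*Hh 2 2*w 2*w 2*w 2*w 2*w 2*w 2*w 2*w 3*w 3 + (2)*D 2*Hh 2 2*w 2*w 2*w 2*w 2*w 2*w 2*w 2*w 2*w 2 + (18)*D 2*Hh 2 3*w 1*w 1*w 2*w 2*w 3 + (-24)*D 2*Hh 2 3*w 1*w 1*w 2*w 2*w 3*w 3*w 3 + (12)*D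 2*Hh 2 3*w 1*w 1*w 2*w 2*w 3*w 3*w 3*w 3*w 3 + (-24)*D 2*Hh 2 3*w 1*w 1*w 2*w 2*w 2*w 2*w 3 + (24)*D 2*Hh 2 3*w 1*w 1*w 2*w 2*w 2*w 2*w 3*w 3*w 3 + (12)*D 2*Hh 2 3*w 1*w 1*w 2*w 2*w 2*w 2*w 2*w 2*w 3 + (-1)*D 2*Hh 2 3*w 1*w 1*w 3 + (-12)*D 2*Hh 2 3*w 1*w 1*w 1*w 1*w 2*w 2*w 3 + (12)*D 2*Hh 2 3*w 1*w 1*w 1*w 1*w 2*w 2*w 3*w 3*w 3 + (12)*D 2*Hh 2 3*w 1*w 1*w 1*w 1*w 2*w 2*w 2*w 2*w 3 + (4)*D 2*Hh 2 3*w 1*w 1*w 1*w 1*w 1*w 1*w 2*w 2*w 3 + (-11)*D 2*Hh 2 3*w 2*w 2*w 3 + (18)*D 2*Hh 2 3*w 2*w 2*w 3*w 3*w 3 + (-12)*D 2*Hh 2 3*w 2*w 2*w 3*w 3*w 3*w 3*w 3 + (4)*D 2*Hh 2 3*w 2*w 2*w 3*w 3*w 3*w 3*w 3*w 3*w 3 + (18)*D 2*Hh 2 3*w 2*w 2*w 2*w 2*w 3 + (-24)*D 2*Hh 2 3*w 2*w 2*w 2*w 2*w 3*w 3*w 3 + (12)*D 2*Hh 2 3*w 2*w 2*w 2*w 2*w 3*w 3*w 3*w 3*w 3 + (-12)*D 2*Hh 2 3*w 2*w 2*w 2*w 2*w 2*w 2*w 3 + (12)*D 2*Hh 2 3*w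 2*w 2*w 2*w 2*w 2*w 2*w 3*w 3*w 3 + (4)*D 2*Hh 2 3*w 2*w 2*w 2*w 2*w 2*w 2*w 2*w 2*w 3 + (1)*D 2*Hh 2 3*w 3 + (-1)*D 2*Hh 2 3*w 3*w 3*w 3 + (9)*D 2*Hh 3 3*w 1*w 1*w 2*w 3*w 3 + (-12)*D 2*Hh 3 3*w 1*w 1*w 2*w 3*w 3*w 3*w 3 + (6)*D 2*Hh 3 3*w 1*w 1*w 2*w 3*w 3*w 3*w 3*w 3*w 3 + (-12)*D 2*Hh 3 3*w 1*w 1*w 2*w 2*w 2*w 3*w 3 + (12)*D 2*Hh 3 3*w 1*w 1*w 2*w 2*w 2*w 3*w 3*w 3*w 3 + (6)*D 2*Hh 3 3*w 1*w 1*w 2*w 2*w 2*w 2*w 2*w 3*w 3 + (-6)*D 2*Hh 3 3*w 1*w 1*w 1*w 1*w 2*w 3*w 3 + (6)*D 2*Hh 3 3*w 1*w 1*w 1*w 1*w 2*w 3*w 3*w 3*w 3 + (6)*D 2*Hh 3 3*w 1*w 1*w 1*w 1*w 2*w 2*w 2*w 3*w 3 + (2)*D 2*Hh 3 3*w 1*w 1*w 1*w 1*w 1*w 1*w 2*w 3*w 3 + (1/2)*D 2*Hh 3 3*w 2 + (-5)*D 2*Hh 3 3*w 2*w 3*w 3 + (9)*D 2*Hh 3 3*w 2*w 3*w 3*w 3*w 3 + (-6)*D 2*Hh 3 3*w 2*w 3*w 3*w 3*w 3*w 3*w 3 + (2)*D 2*Hh 3 3*w 2*w 3*w 3*w 3*w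 3*w 3*w 3*w 3*w 3 + (9)*D 2*Hh 3 3*w 2*w 2*w 2*w 3*w 3 + (-12)*D 2*Hh 3 3*w 2*w 2*w 2*w 3*w 3*w 3*w 3 + (6)*D 2*Hh 3 3*w 2*w 2*w 2*w 3*w 3*w 3*w 3*w 3*w 3 + (-6)*D 2*Hh 3 3*w 2*w 2*w 2*w 2*w 2*w 3*w 3 + (6)*D 2*Hh 3 3*w 2*w 2*w 2*w 2*w 2*w 3*w 3*w 3*w 3 + (2)*D 2*Hh 3 3*w 2*w 2*w 2*w 2*w 2*w 2*w 2*w 3*w 3 + (-3)*D 2*w 1*w 1*w 2 + (4)*D 2*w 1*w 1*w 2*w 3*w 3 + (4)*D 2*w 1*w 1*w 2*w 2*w 2 + (2)*D 2*w 1*w 1*w 1*w 1*w 2 + (3)*D 2*w 2 + (-3)*D 2*w 2*w 3*w 3 + (2)*D 2*w 2*w 3*w 3*w 3*w 3 + (-3)*D 2*w 2*w 2*w 2 + (4)*D 2*w 2*w 2*w 2*w 3*w 3 + (2)*D 2*w 2*w 2*w 2*w 2*w 2 + (-1/2)*D 3*Hh 0 0*w 3 + (-4)*D 3*Hh 0 1*w 1*w 2*w 2*w 3 + (4)*D 3*Hh 0 1*w 1*w 2*w 2*w 3*w 3*w 3 + (2)*D 3*Hh 0 1*w 1*w 2*w 2*w 2*w 2*w 3 + (2)*D 3*Hh 0 1*w 1*w 3 + (-4)*D 3*Hh 0 1*w 1*w 3*w 3*w 3 + (2)*D 3*Hh 0 1*w 1*w 3*w 3*w 3*w 3*w 3 +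 (4)*D 3*Hh 0 1*w 1*w 1*w 1*w 2*w 2*w 3 + (-4)*D 3*Hh 0 1*w 1*w 1*w 1*w 3 + (4)*D 3*Hh 0 1*w 1*w 1*w 1*w 3*w 3*w 3 + (2)*D 3*Hh 0 1*w 1*w 1*w 1*w 1*w 1*w 3 + (-4)*D 3*Hh 0 2*w 1*w 1*w 2*w 3 + (4)*D 3*Hh 0 2*w 1*w 1*w 2*w 3*w 3*w 3 + (4)*D 3*Hh 0 2*w 1*w 1*w 2*w 2*w 2*w 3 + (2)*D 3*Hh 0 2*w 1*w 1*w 1*w 1*w 2*w 3 + (2)*D 3*Hh 0 2*w 2*w 3 + (-4)*D 3*Hh 0 2*w 2*w 3*w 3*w 3 + (2)*D 3*Hh 0 2*w 2*w 3*w 3*w 3*w 3*w 3 + (-4)*D 3*Hh 0 2*w 2*w 2*w 2*w 3 + (4)*D 3*Hh 0 2*w 2*w 2*w 2*w 3*w 3*w 3 + (2)*D 3*Hh 0 2*w 2*w 2*w 2*w 2*w 2*w 3 + (4)*D 3*Hh 0 3*w 1*w 1*w 2*w 2*w 3*w 3 + (-4)*D 3*Hh 0 3*w 1*w 1*w 3*w 3 + (4)*D 3*Hh 0 3*w 1*w 1*w 3*w 3*w 3*w 3 + (2)*D 3*Hh 0 3*w 1*w 1*w 1*w 1*w 3*w 3 + (-4)*D 3*Hh 0 3*w 2*w 2*w 3*w 3 + (4)*D 3*Hh 0 3*w 2*w 2*w 3*w 3*w 3*w 3 + (2)*D 3*Hh 0 3*w 2*w 2*w 2*w 2*w 3*w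 3 + (2)*D 3*Hh 0 3*w 3*w 3 + (-4)*D 3*Hh 0 3*w 3*w 3*w 3*w 3 + (2)*D 3*Hh 0 3*w 3*w 3*w 3*w 3*w 3*w 3 + (9)*D 3*Hh 1 1*w 1*w 1*w 2*w 2*w 3 + (-12)*D 3*Hh 1 1*w 1*w 1*w 2*w 2*w 3*w 3*w 3 + (6)*D 3*Hh 1 1*w 1*w 1*w 2*w 2*w 3*w 3*w 3*w 3*w 3 + (-6)*D 3*Hh 1 1*w 1*w 1*w 2*w 2*w 2*w 2*w 3 + (6)*D 3*Hh 1 1*w 1*w 1*w 2*w 2*w 2*w 2*w 3*w 3*w 3 + (2)*D 3*Hh 1 1*w 1*w 1*w 2*w 2*w 2*w 2*w 2*w 2*w 3 + (-5)*D 3*Hh 1 1*w 1*w 1*w 3 + (9)*D 3*Hh 1 1*w 1*w 1*w 3*w 3*w 3 + (-6)*D 3*Hh 1 1*w 1*w 1*w 3*w 3*w 3*w 3*w 3 + (2)*D 3*Hh 1 1*w 1*w 1*w 3*w 3*w 3*w 3*w 3*w 3*w 3 + (-12)*D 3*Hh 1 1*w 1*w 1*w 1*w 1*w 2*w 2*w 3 + (12)*D 3*Hh 1 1*w 1*w 1*w 1*w 1*w 2*w 2*w 3*w 3*w 3 + (6)*D 3*Hh 1 1*w 1*w 1*w 1*w 1*w 2*w 2*w 2*w 2*w 3 + (9)*D 3*Hh 1 1*w 1*w 1*w 1*w 1*w 3 + (-12)*D 3*Hh 1 1*w 1*w 1*w 1*w 1*w 3*w 3*w 3 + (6)*D 3*Hh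 1 1*w 1*w 1*w 1*w 1*w 3*w 3*w 3*w 3*w 3 + (6)*D 3*Hh 1 1*w 1*w 1*w 1*w 1*w 1*w 1*w 2*w 2*w 3 + (-6)*D 3*Hh 1 1*w 1*w 1*w 1*w 1*w 1*w 1*w 3 + (6)*D 3*Hh 1 1*w 1*w 1*w 1*w 1*w 1*w 1*w 3*w 3*w 3 + (2)*D 3*Hh 1 1*w 1*w 1*w 1*w 1*w 1*w 1*w 1*w 1*w 3 + (1/2)*D 3*Hh 1 1*w 3 + (-10)*D 3*Hh 1 2*w 1*w 2*w 3 + (18)*D 3*Hh 1 2*w 1*w 2*w 3*w 3*w 3 + (-12)*D 3*Hh 1 2*w 1*w 2*w 3*w 3*w 3*w 3*w 3 + (4)*D 3*Hh 1 2*w 1*w 2*w 3*w 3*w 3*w 3*w 3*w 3*w 3 + (18)*D 3*Hh 1 2*w 1*w 2*w 2*w 2*w 3 + (-24)*D 3*Hh 1 2*w 1*w 2*w 2*w 2*w 3*w 3*w 3 + (12)*D 3*Hh 1 2*w 1*w 2*w 2*w 2*w 3*w 3*w 3*w 3*w 3 + (-12)*D 3*Hh 1 2*w 1*w 2*w 2*w 2*w 2*w 2*w 3 + (12)*D 3*Hh 1 2*w 1*w 2*w 2*w 2*w 2*w 2*w 3*w 3*w 3 + (4)*D 3*Hh 1 2*w 1*w 2*w 2*w 2*w 2*w 2*w 2*w 2*w 3 + (18)*D 3*Hh 1 2*w 1*w 1*w 1*w 2*w 3 + (-24)*D 3*Hh 1 2*w 1*w 1*w 1*w 2*w 3*w 3*w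 3 + (12)*D 3*Hh 1 2*w 1*w 1*w 1*w 2*w 3*w 3*w 3*w 3*w 3 + (-24)*D 3*Hh 1 2*w 1*w 1*w 1*w 2*w 2*w 2*w 3 + (24)*D 3*Hh 1 2*w 1*w 1*w 1*w 2*w 2*w 2*w 3*w 3*w 3 + (12)*D 3*Hh 1 2*w 1*w 1*w 1*w 2*w 2*w 2*w 2*w 2*w 3 + (-12)*D 3*Hh 1 2*w 1*w 1*w 1*w 1*w 1*w 2*w 3 + (12)*D 3*Hh 1 2*w 1*w 1*w 1*w 1*w 1*w 2*w 3*w 3*w 3 + (12)*D 3*Hh 1 2*w 1*w 1*w 1*w 1*w 1*w 2*w 2*w 2*w 3 + (4)*D 3*Hh 1 2*w 1*w 1*w 1*w 1*w 1*w 1*w 1*w 2*w 3 + (1)*D 3*Hh 1 3*w 1 + (-1)*D 3*Hh 1 3*w 1*w 2*w 2 + (18)*D 3*Hh 1 3*w 1*w 2*w 2*w 3*w 3 + (-24)*D 3*Hh 1 3*w 1*w 2*w 2*w 3*w 3*w 3*w 3 + (12)*D 3*Hh 1 3*w 1*w 2*w 2*w 3*w 3*w 3*w 3*w 3*w 3 + (-12)*D 3*Hh 1 3*w 1*w 2*w 2*w 2*w 2*w 3*w 3 + (12)*D 3*Hh 1 3*w 1*w 2*w 2*w 2*w 2*w 3*w 3*w 3*w 3 + (4)*D 3*Hh 1 3*w 1*w 2*w 2*w 2*w 2*w 2*w 2*w 3*w 3 + (-11)*D 3*Hh 1 3*w 1*w 3*w 3 + (18)*D 3*Hh 1 3*w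 1*w 3*w 3*w 3*w 3 + (-12)*D 3*Hh 1 3*w 1*w 3*w 3*w 3*w 3*w 3*w 3 + (4)*D 3*Hh 1 3*w 1*w 3*w 3*w 3*w 3*w 3*w 3*w 3*w 3 + (-1)*D 3*Hh 1 3*w 1*w 1*w 1 + (-24)*D 3*Hh 1 3*w 1*w 1*w 1*w 2*w 2*w 3*w 3 + (24)*D 3*Hh 1 3*w 1*w 1*w 1*w 2*w 2*w 3*w 3*w 3*w 3 + (12)*D 3*Hh 1 3*w 1*w 1*w 1*w 2*w 2*w 2*w 2*w 3*w 3 + (18)*D 3*Hh 1 3*w 1*w 1*w 1*w 3*w 3 + (-24)*D 3*Hh 1 3*w 1*w 1*w 1*w 3*w 3*w 3*w 3 + (12)*D 3*Hh 1 3*w 1*w 1*w 1*w 3*w 3*w 3*w 3*w 3*w 3 + (12)*D 3*Hh 1 3*w 1*w 1*w 1*w 1*w 1*w 2*w 2*w 3*w 3 + (-12)*D 3*Hh 1 3*w 1*w 1*w 1*w 1*w 1*w 3*w 3 + (12)*D 3*Hh 1 3*w 1*w 1*w 1*w 1*w 1*w 3*w 3*w 3*w 3 + (4)*D 3*Hh 1 3*w 1*w 1*w 1*w 1*w 1*w 1*w 1*w 3*w 3 + (9)*D 3*Hh 2 2*w 1*w 1*w 2*w 2*w 3 + (-12)*D 3*Hh 2 2*w 1*w 1*w 2*w 2*w 3*w 3*w 3 + (6)*D 3*Hh 2 2*w 1*w 1*w 2*w 2*w 3*w 3*w 3*w 3*w 3 + (-12)*D 3*Hh 2 2*w 1*w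 1*w 2*w 2*w 2*w 2*w 3 + (12)*D 3*Hh 2 2*w 1*w 1*w 2*w 2*w 2*w 2*w 3*w 3*w 3 + (6)*D 3*Hh 2 2*w 1*w 1*w 2*w 2*w 2*w 2*w 2*w 2*w 3 + (-6)*D 3*Hh 2 2*w 1*w 1*w 1*w 1*w 2*w 2*w 3 + (6)*D 3*Hh 2 2*w 1*w 1*w 1*w 1*w 2*w 2*w 3*w 3*w 3 + (6)*D 3*Hh 2 2*w 1*w 1*w 1*w 1*w 2*w 2*w 2*w 2*w 3 + (2)*D 3*Hh 2 2*w 1*w 1*w 1*w 1*w 1*w 1*w 2*w 2*w 3 + (-5)*D 3*Hh 2 2*w 2*w 2*w 3 + (9)*D 3*Hh 2 2*w 2*w 2*w 3*w 3*w 3 + (-6)*D 3*Hh 2 2*w 2*w 2*w 3*w 3*w 3*w 3*w 3 + (2)*D 3*Hh 2 2*w 2*w 2*w 3*w 3*w 3*w 3*w 3*w 3*w 3 + (9)*D 3*Hh 2 2*w 2*w 2*w 2*w 2*w 3 + (-12)*D 3*Hh 2 2*w 2*w 2*w 2*w 2*w 3*w 3*w 3 + (6)*D 3*Hh 2 2*w 2*w 2*w 2*w 2*w 3*w 3*w 3*w 3*w 3 + (-6)*D 3*Hh 2 2*w 2*w 2*w 2*w 2*w 2*w 2*w 3 + (6)*D 3*Hh 2 2*w 2*w 2*w 2*w 2*w 2*w 2*w 3*w 3*w 3 + (2)*D 3*Hh 2 2*w 2*w 2*w 2*w 2*w 2*w 2*w 2*w 2*w 3 + (1/2)*D 3*Hh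 2 2*w 3 + (-1)*D 3*Hh 2 3*w 1*w 1*w 2 + (18)*D 3*Hh 2 3*w 1*w 1*w 2*w 3*w 3 + (-24)*D 3*Hh 2 3*w 1*w 1*w 2*w 3*w 3*w 3*w 3 + (12)*D 3*Hh 2 3*w 1*w 1*w 2*w 3*w 3*w 3*w 3*w 3*w 3 + (-24)*D 3*Hh 2 3*w 1*w 1*w 2*w 2*w 2*w 3*w 3 + (24)*D 3*Hh 2 3*w 1*w 1*w 2*w 2*w 2*w 3*w 3*w 3*w 3 + (12)*D 3*Hh 2 3*w 1*w 1*w 2*w 2*w 2*w 2*w 2*w 3*w 3 + (-12)*D 3*Hh 2 3*w 1*w 1*w 1*w 1*w 2*w 3*w 3 + (12)*D 3*Hh 2 3*w 1*w 1*w 1*w 1*w 2*w 3*w 3*w 3*w 3 + (12)*D 3*Hh 2 3*w 1*w 1*w 1*w 1*w 2*w 2*w 2*w 3*w 3 + (4)*D 3*Hh 2 3*w 1*w 1*w 1*w 1*w 1*w 1*w 2*w 3*w 3 + (1)*D 3*Hh 2 3*w 2 + (-11)*D 3*Hh 2 3*w 2*w 3*w 3 + (18)*D 3*Hh 2 3*w 2*w 3*w 3*w 3*w 3 + (-12)*D 3*Hh 2 3*w 2*w 3*w 3*w 3*w 3*w 3*w 3 + (4)*D 3*Hh 2 3*w 2*w 3*w 3*w 3*w 3*w 3*w 3*w 3*w 3 + (-1)*D 3*Hh 2 3*w 2*w 2*w 2 + (18)*D 3*Hh 2 3*w 2*w 2*w 2*w 3*w 3 + (-24)*D 3*Hh 2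 3*w 2*w 2*w 2*w 3*w 3*w 3*w 3 + (12)*D 3*Hh 2 3*w 2*w 2*w 2*w 3*w 3*w 3*w 3*w 3*w 3 + (-12)*D 3*Hh 2 3*w 2*w 2*w 2*w 2*w 2*w 3*w 3 + (12)*D 3*Hh 2 3*w 2*w 2*w 2*w 2*w 2*w 3*w 3*w 3*w 3 + (4)*D 3*Hh 2 3*w 2*w 2*w 2*w 2*w 2*w 2*w 2*w 3*w 3 + (-12)*D 3*Hh 3 3*w 1*w 1*w 2*w 2*w 3*w 3*w 3 + (12)*D 3*Hh 3 3*w 1*w 1*w 2*w 2*w 3*w 3*w 3*w 3*w 3 + (6)*D 3*Hh 3 3*w 1*w 1*w 2*w 2*w 2*w 2*w 3*w 3*w 3 + (-1)*D 3*Hh 3 3*w 1*w 1*w 3 + (9)*D 3*Hh 3 3*w 1*w 1*w 3*w 3*w 3 + (-12)*D 3*Hh 3 3*w 1*w 1*w 3*w 3*w 3*w 3*w 3 + (6)*D 3*Hh 3 3*w 1*w 1*w 3*w 3*w 3*w 3*w 3*w 3*w 3 + (6)*D 3*Hh 3 3*w 1*w 1*w 1*w 1*w 2*w 2*w 3*w 3*w 3 + (-6)*D 3*Hh 3 3*w 1*w 1*w 1*w 1*w 3*w 3*w 3 + (6)*D 3*Hh 3 3*w 1*w 1*w 1*w 1*w 3*w 3*w 3*w 3*w 3 + (2)*D 3*Hh 3 3*w 1*w 1*w 1*w 1*w 1*w 1*w 3*w 3*w 3 + (-1)*D 3*Hh 3 3*w 2*w 2*w 3 + (9)*D 3*Hh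 3 3*w 2*w 2*w 3*w 3*w 3 + (-12)*D 3*Hh 3 3*w 2*w 2*w 3*w 3*w 3*w 3*w 3 + (6)*D 3*Hh 3 3*w 2*w 2*w 3*w 3*w 3*w 3*w 3*w 3*w 3 + (-6)*D 3*Hh 3 3*w 2*w 2*w 2*w 2*w 3*w 3*w 3 + (6)*D 3*Hh 3 3*w 2*w 2*w 2*w 2*w 3*w 3*w 3*w 3*w 3 + (2)*D 3*Hh 3 3*w 2*w 2*w 2*w 2*w 2*w 2*w 3*w 3*w 3 + (3/2)*D 3*Hh 3 3*w 3 + (-6)*D 3*Hh 3 3*w 3*w 3*w 3 + (9)*D 3*Hh 3 3*w 3*w 3*w 3*w 3*w 3 + (-6)*D 3*Hh 3 3*w 3*w 3*w 3*w 3*w 3*w 3*w 3 + (2)*D 3*Hh 3 3*w 3*w 3*w 3*w 3*w 3*w 3*w 3*w 3*w 3 + (4)*D 3*w 1*w 1*w 2*w 2*w 3 + (-3)*D 3*w 1*w 1*w 3 + (4)*D 3*w 1*w 1*w 3*w 3*w 3 + (2)*D 3*w 1*w 1*w 1*w 1*w 3 + (-3)*D 3*w 2*w 2*w 3 + (4)*D 3*w 2*w 2*w 3*w 3*w 3 + (2)*D 3*w 2*w 2*w 2*w 2*w 3 + (3)*D 3*w 3 + (-3)*D 3*w 3*w 3*w 3 + (2)*D 3*w 3*w 3*w 3*w 3*w 3) * (r * ir - 1)).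
  - field.
  - rewrite HW, Hri. ring.
Qed.

Lemma Rabs_sum3 (f : nat -> R) : Rabs (sum3 f) <= sum3 (fun i => Rabs (f i)).
Proof. unfold sum3. eapply Rle_trans; [apply Rabs_triang|].
  apply Rplus_le_compat_r. apply Rabs_triang. Qed.

Lemma Rabs_sum4 (f : nat -> R) : Rabs (sum4 f) <= sum4 (fun i => Rabs (f i)).
Proof. unfold sum4. eapply Rle_trans; [apply Rabs_triang|].
  apply Rplus_le_compat_r. eapply Rle_trans; [apply Rabs_triang|].
  apply Rplus_le_compat_r. apply Rabs_triang. Qed.

Lemma sum3_le (f g : nat -> R) : (forall i, (1 <= i <= 3)%nat -> f i <= g i) -> sum3 f <= sum3 g.
Proof. intro H; unfold sum3. repeat apply Rplus_le_compat; apply H; lia. Qed.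

Lemma sum4_le (f g : nat -> R) : (forall i, (i < 4)%nat -> f i <= g i) -> sum4 f <= sum4 g.
Proof. intro H; unfold sum4. repeat apply Rplus_le_compat; apply H; lia. Qed.

Lemma sum3_nonneg (f : nat -> R) : (forall i, 0 <= f i) -> 0 <= sum3 f.
Proof. intro H; unfold sum3. pose proof (H 1%nat); pose proof (H 2%nat); pose proof (H 3%nat); lra. Qed.

Lemma sum4_nonneg (f : nat -> R) : (forall i, 0 <= f i) -> 0 <= sum4 f.
Proof. intro H; unfold sum4. pose proof (H 0%nat); pose proof (H 1%nat); pose proof (H 2%nat); pose proof (H 3%nat); lra. Qed.

Lemma sum3_le_sum4 (f : nat -> R) : (forall i, 0 <= f i) -> sum3 f <= sum4 f.
Proof. intro H; unfold sum3, sum4. pose proof (H 0%nat); lra. Qed.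

Lemma sum3_const_le (f : nat -> R) c : (forall i, (1 <= i <= 3)%nat -> f i <= c) -> sum3 f <= 3 * c.
Proof. intro H; unfold sum3. pose proof (H 1%nat ltac:(lia)); pose proof (H 2%nat ltac:(lia)); pose proof (H 3%nat ltac:(lia)); lra. Qed.

Lemma abs_le1 x : x * x <= 1 -> Rabs x <= 1.
Proof. intro H. unfold Rabs; destruct (Rcase_abs x); nra. Qed.

Lemma abs_mul_le (a b A B : R) : Rabs a <= A -> Rabs b <= B -> Rabs (a * b) <= A * B.
Proof. intros H1 H2. rewrite Rabs_mult. apply Rmult_le_compat; auto; apply Rabs_pos. Qed.

Lemma abs_mul_le1 (a b B : R) : Rabs a <= 1 -> Rabs b <= B -> Rabs (a * b) <= B.
Proof. intros H1 H2. rewrite Rabs_mult. pose proof (Rabs_pos a); pose proof (Rabs_pos b). nra. Qed.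

Lemma sqrt_ge_abs (s x : R) : x ^ 2 <= s -> Rabs x <= sqrt s.
Proof. intro H. assert (E : Rabs x = sqrt (x ^ 2)).
  { rewrite <- sqrt_Rsqr_abs. unfold Rsqr. f_equal. ring. }
  rewrite E. apply sqrt_le_1_alt. exact H. Qed.

Lemma sum3_mult_r (f : nat -> R) c : sum3 f * c = sum3 (fun i => f i * c).
Proof. unfold sum3; ring. Qed.

Lemma sum4_ge_term (f : nat -> R) a : (forall i, 0 <= f i) -> (a < 4)%nat -> f a <= sum4 f.
Proof. intros H Ha. unfold sum4. pose proof (H 0%nat); pose proof (H 1%nat); pose proof (H 2%nat); pose proof (H 3%nat).
  destruct a as [|[|[|[|a]]]]; try lia; lra. Qed.

Lemma sum44_ge_term (f : nat -> nat -> R) a b : (forall i j, 0 <= f i j) -> (a < 4)%nat -> (b < 4)%nat ->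
  f a b <= sum4 (fun i => sum4 (fun j => f i j)).
Proof. intros H Ha Hb. eapply Rle_trans.
  - apply (sum4_ge_term (fun j => f a j) b); auto.
  - apply (sum4_ge_term (fun i => sum4 (fun j => f i j)) a); auto.
    intro i; apply sum4_nonneg; auto. Qed.

Lemma abs3_le (a b c A B C : R) : Rabs a <= A -> Rabs b <= B -> Rabs c <= C ->
  Rabs (a * b * c) <= A * B * C.
Proof. intros. apply abs_mul_le; auto. apply abs_mul_le; auto. Qed.

Lemma mink_abs a : Rabs (mink a a) = 1.
Proof. unfold mink. rewrite Nat.eqb_refl. destruct (Nat.eqb a 0);
  unfold Rabs; destruct (Rcase_abs _); lra. Qed.

Definition HA := sum4 (fun a => sum4 (fun b => Rabs (Hh a b))).

Lemma HA_nonneg : 0 <= HA.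
Proof. unfold HA. apply sum4_nonneg; intro; apply sum4_nonneg; intro; apply Rabs_pos. Qed.

Lemma lowc_bound X Y : (forall a, (a < 4)%nat -> Rabs (X a) <= 1) ->
  (forall b, (b < 4)%nat -> Rabs (Y b) <= 1) -> Rabs (lowc Hh X Y) <= HA.
Proof. intros HX HY.
  assert (E : lowc Hh X Y = sum4 (fun a => sum4 (fun b => (mink a a * mink b b) * (Hh a b * (X a * Y b))))).
  { unfold lowc, sum4, mink; simpl; ring. }
  rewrite E. eapply Rle_trans; [apply Rabs_sum4|]. unfold HA. apply sum4_le; intros a Ha.
  eapply Rle_trans; [apply Rabs_sum4|]. apply sum4_le; intros b Hb.
  apply abs_mul_le1. { rewrite Rabs_mult, !mink_abs. lra. }
  rewrite !Rabs_mult. pose proof (HX a Ha); pose proof (HY b Hb).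
  pose proof (Rabs_pos (Hh a b)); pose proof (Rabs_pos (X a)); pose proof (Rabs_pos (Y b)).
  assert (Rabs (X a) * Rabs (Y b) <= 1) by nra. nra. Qed.

Variables (S1 S2 : nat -> R).
Definition HLT := Rabs (lowc Hh Lw Lw) + Rabs (lowc Hh Lw S1) + Rabs (lowc Hh Lw S2).
Definition TPs := sum4 (fun a => sum4 (fun b => Rabs (TPA a b))).
Definition Ds := sum4 (fun a => Rabs (D a)).
Definition TT2 := sqrt (sum4 (fun a => sum4 (fun b => TTA a b ^ 2))).
Definition Ts := sum4 (fun a => Rabs (TA a)).

Lemma TT_bd a b : (a < 4)%nat -> (b < 4)%nat -> Rabs (TTA a b) <= TT2.
Proof. intros. apply sqrt_ge_abs. apply (sum44_ge_term (fun i j => TTA i j ^ 2)); auto.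
  intros; apply pow2_ge_0. Qed.
Lemma TP_bd a b : (a < 4)%nat -> (b < 4)%nat -> Rabs (TPA a b) <= TPs.
Proof. intros. apply (sum44_ge_term (fun i j => Rabs (TPA i j))); auto. intros; apply Rabs_pos. Qed.
Lemma D_bd a : (a < 4)%nat -> Rabs (D a) <= Ds.
Proof. intros. apply (sum4_ge_term (fun i => Rabs (D i))); auto. intros; apply Rabs_pos. Qed.
Lemma TA_bd a : (a < 4)%nat -> Rabs (TA a) <= Ts.
Proof. intros. apply (sum4_ge_term (fun i => Rabs (TA i))); auto. intros; apply Rabs_pos. Qed.
Lemma TT2_nonneg : 0 <= TT2. Proof. apply sqrt_pos. Qed.
Lemma TPs_nonneg : 0 <= TPs.
Proof. apply sum4_nonneg; intro; apply sum4_nonneg; intro; apply Rabs_pos. Qed.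
Lemma Ds_nonneg : 0 <= Ds. Proof. apply sum4_nonneg; intro; apply Rabs_pos. Qed.
Lemma Ts_nonneg : 0 <= Ts. Proof. apply sum4_nonneg; intro; apply Rabs_pos. Qed.
Lemma HLT_nonneg : 0 <= HLT.
Proof. unfold HLT. pose proof (Rabs_pos (lowc Hh Lw Lw)); pose proof (Rabs_pos (lowc Hh Lw S1));
  pose proof (Rabs_pos (lowc Hh Lw S2)); lra. Qed.

Section Bounds.
Hypothesis Hw : forall i, (1 <= i <= 3)%nat -> Rabs (w i) <= 1.
Hypothesis Hr : 0 < r.

Lemma Lw_bd a : (a < 4)%nat -> Rabs (Lw a) <= 1.
Proof. intro. destruct a as [|a]; simpl. rewrite Rabs_R1; lra. apply Hw; lia. Qed.
Lemma Lbw_bd a : (a < 4)%nat -> Rabs (Lbw a) <= 1.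
Proof. intro. destruct a as [|a]; simpl. rewrite Rabs_R1; lra. rewrite Rabs_Ropp; apply Hw; lia. Qed.
Lemma ev_bd i a : Rabs (ev i a) <= 1.
Proof. unfold ev, kd. destruct (Nat.eqb a i); unfold Rabs; destruct (Rcase_abs _); lra. Qed.
Lemma PP_bd i j : (1 <= i <= 3)%nat -> (1 <= j <= 3)%nat -> Rabs (PP i j) <= 2.
Proof. intros Hi Hj. unfold PP. eapply Rle_trans; [apply Rabs_triang|]. rewrite Rabs_Ropp.
  assert (Rabs (kd i j) <= 1) by (unfold kd; destruct (Nat.eqb i j); unfold Rabs; destruct (Rcase_abs _); lra).
  assert (Rabs (w i * w j) <= 1) by (rewrite Rabs_mult; pose proof (Hw i Hi); pose proof (Hw j Hj);
     pose proof (Rabs_pos (w i)); pose proof (Rabs_pos (w j)); nra). lra. Qed.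

Lemma absr : Rabs r = r. Proof. apply Rabs_pos_eq; lra. Qed.

Lemma absph : Rabs (TA 0 - ph / r) <= Ts + / r * Rabs ph.
Proof. eapply Rle_trans; [apply Rabs_triang|]. rewrite Rabs_Ropp. unfold Rdiv. rewrite Rabs_mult.
  rewrite (Rabs_pos_eq (/ r)) by (left; apply Rinv_0_lt_compat; lra).
  pose proof (TA_bd 0 ltac:(lia)). lra. Qed.

Lemma T2_bd : Rabs (lowc Hh Lw Lbw * (TA 0 - ph / r) / 2) <= HA * (Ts + / r * Rabs ph).
Proof. replace (lowc Hh Lw Lbw * (TA 0 - ph / r) / 2) with (/2 * (lowc Hh Lw Lbw * (TA 0 - ph / r))) by (field; lra).
  rewrite Rabs_mult, Rabs_mult.
  rewrite (Rabs_pos_eq (/2)) by lra.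
  pose proof (lowc_bound Lw Lbw Lw_bd Lbw_bd). pose proof absph.
  pose proof (Rabs_pos (lowc Hh Lw Lbw)). pose proof (Rabs_pos (TA 0 - ph / r)).
  pose proof HA_nonneg. nra. Qed.

Lemma drA_bd : Rabs (drA - D 0) <= Ds.
Proof. eapply Rle_trans; [apply Rabs_triang|]. rewrite Rabs_Ropp.
  assert (Rabs drA <= sum3 (fun j => Rabs (D j))).
  { unfold drA. eapply Rle_trans; [apply Rabs_sum3|]. apply sum3_le; intros j Hj.
    apply abs_mul_le1; [apply Hw; lia | lra]. }
  unfold Ds, sum4; unfold sum3 in H. lra. Qed.

Lemma T3_bd : Rabs (lowc Hh Lw Lw * (drA - D 0) / 2) <= HLT * Ds.
Proof. replace (lowc Hh Lw Lw * (drA - D 0) / 2) with (/2 * (lowc Hh Lw Lw * (drA - D 0))) by field.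
  rewrite Rabs_mult, Rabs_mult, (Rabs_pos_eq (/2)) by lra.
  pose proof drA_bd. assert (Rabs (lowc Hh Lw Lw) <= HLT).
  { unfold HLT. pose proof (Rabs_pos (lowc Hh Lw S1)); pose proof (Rabs_pos (lowc Hh Lw S2)); lra. }
  pose proof (Rabs_pos (lowc Hh Lw Lw)); pose proof (Rabs_pos (drA - D 0)); pose proof Ds_nonneg.
  nra. Qed.

Lemma T4_bd : Rabs (r / 4 * lowc Hh Lbw Lbw * TTA 0 0) <= HA * (r * TT2).
Proof. rewrite !Rabs_mult. unfold Rdiv. rewrite Rabs_mult, absr, (Rabs_pos_eq (/4)) by lra.
  pose proof (lowc_bound Lbw Lbw Lbw_bd Lbw_bd). pose proof (TT_bd 0 0 ltac:(lia) ltac:(lia)).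
  pose proof (Rabs_pos (lowc Hh Lbw Lbw)); pose proof (Rabs_pos (TTA 0 0)); pose proof HA_nonneg.
  pose proof TT2_nonneg.
  assert (P : Rabs (lowc Hh Lbw Lbw) * Rabs (TTA 0 0) <= HA * TT2) by (apply Rmult_le_compat; auto).
  replace (r * / 4 * Rabs (lowc Hh Lbw Lbw) * Rabs (TTA 0 0)) with ((r * / 4) * (Rabs (lowc Hh Lbw Lbw) * Rabs (TTA 0 0))) by ring.
  apply Rle_trans with ((r * / 4) * (HA * TT2)). apply Rmult_le_compat_l; lra.
  assert (0 <= HA * TT2 * r) by (apply Rmult_le_pos; [apply Rmult_le_pos|]; lra). lra. Qed.

Lemma T5_bd : Rabs (r * sum3 (fun i => sum3 (fun j => lowc Hh Lbw (ev i) * PP i j * TTA 0 j)))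
   <= 18 * (HA * (r * TT2)).
Proof. rewrite Rabs_mult, absr.
  assert (Rabs (sum3 (fun i => sum3 (fun j => lowc Hh Lbw (ev i) * PP i j * TTA 0 j))) <= 3 * (3 * (HA * 2 * TT2))).
  { eapply Rle_trans; [apply Rabs_sum3|]. apply sum3_const_le; intros i Hi.
    eapply Rle_trans; [apply Rabs_sum3|]. apply sum3_const_le; intros j Hj.
    apply abs3_le. apply lowc_bound; [apply Lbw_bd | intros; apply ev_bd].
    apply PP_bd; auto. apply TT_bd; lia. }
  pose proof HA_nonneg; pose proof TT2_nonneg. nra. Qed.

Definition Vj j := sum4 (fun a => Lbw a * TPA j a).
Definition T6S := lowc Hh Lw S1 * sum3 (fun j => S1 j * Vj j) + lowc Hh Lw S2 * sum3 (fun j => S2 j * Vj j).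

Lemma T6_conv : S1 0 = 0 -> S2 0 = 0 ->
  (forall i j, (1 <= i <= 3)%nat -> (1 <= j <= 3)%nat -> PP i j = S1 i * S1 j + S2 i * S2 j) ->
  sum3 (fun i => sum3 (fun j => lowc Hh Lw (ev i) * PP i j * Vj j)) = T6S.
Proof. intros H10 H20 HP. unfold T6S. unfold sum3 at 1 2 3 4.
  rewrite !HP by lia.
  generalize (Vj 1) (Vj 2) (Vj 3). intros v1 v2 v3.
  unfold lowc, ev, kd, sum3, sum4, mink, Lw; simpl. rewrite H10, H20. ring. Qed.

Lemma Vsum_bd : sum3 (fun j => Rabs (Vj j)) <= TPs.
Proof. eapply Rle_trans with (sum3 (fun j => sum4 (fun a => Rabs (TPA j a)))).
  - apply sum3_le; intros j Hj. unfold Vj. eapply Rle_trans; [apply Rabs_sum4|].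
    apply sum4_le; intros a Ha. apply abs_mul_le1; [apply Lbw_bd; auto | lra].
  - unfold TPs. apply sum3_le_sum4. intro; apply sum4_nonneg; intro; apply Rabs_pos. Qed.

Lemma T6_bd : (forall i, (1 <= i <= 3)%nat -> Rabs (S1 i) <= 1) -> (forall i, (1 <= i <= 3)%nat -> Rabs (S2 i) <= 1) ->
  Rabs (r * T6S) <= HLT * (r * TPs).
Proof. intros HS1 HS2. rewrite Rabs_mult, absr.
  assert (A1 : Rabs (sum3 (fun j => S1 j * Vj j)) <= TPs).
  { eapply Rle_trans; [apply Rabs_sum3|]. eapply Rle_trans; [|apply Vsum_bd].
    apply sum3_le; intros. apply abs_mul_le1; auto. lra. }
  assert (A2 : Rabs (sum3 (fun j => S2 j * Vj j)) <= TPs).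
  { eapply Rle_trans; [apply Rabs_sum3|]. eapply Rle_trans; [|apply Vsum_bd].
    apply sum3_le; intros. apply abs_mul_le1; auto. lra. }
  assert (Rabs T6S <= HLT * TPs).
  { unfold T6S. eapply Rle_trans; [apply Rabs_triang|]. rewrite !Rabs_mult.
    unfold HLT. pose proof (Rabs_pos (lowc Hh Lw S1)); pose proof (Rabs_pos (lowc Hh Lw S2));
    pose proof (Rabs_pos (lowc Hh Lw Lw)); pose proof TPs_nonneg;
    pose proof (Rabs_pos (sum3 (fun j => S1 j * Vj j))); pose proof (Rabs_pos (sum3 (fun j => S2 j * Vj j))).
    nra. }
  pose proof HLT_nonneg; pose proof TPs_nonneg. nra. Qed.

Lemma sum33_H_bd : sum3 (fun m => sum3 (fun n => Rabs (Hh m n))) <= HA.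
Proof. unfold HA. eapply Rle_trans.
  - apply sum3_le. intros m Hm. apply (sum3_le_sum4 (fun n => Rabs (Hh m n))). intro; apply Rabs_pos.
  - apply sum3_le_sum4. intro; apply sum4_nonneg; intro; apply Rabs_pos. Qed.

Lemma T7_bd : Rabs (r * sum3 (fun m => sum3 (fun n => Hh m n * sum3 (fun i => sum3 (fun j => PP m i * PP n j * TTA i j)))))
   <= 36 * (HA * (r * TT2)).
Proof. rewrite Rabs_mult, absr.
  assert (Rabs (sum3 (fun m => sum3 (fun n => Hh m n * sum3 (fun i => sum3 (fun j => PP m i * PP n j * TTA i j)))))
     <= sum3 (fun m => sum3 (fun n => Rabs (Hh m n))) * (36 * TT2)).
  { eapply Rle_trans; [apply Rabs_sum3|].
    rewrite sum3_mult_r.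
    apply sum3_le; intros m Hm.
    eapply Rle_trans; [apply Rabs_sum3|].
    rewrite sum3_mult_r.
    apply sum3_le; intros n Hn.
    apply abs_mul_le; [lra|].
    replace (36 * TT2) with (3 * (3 * (2 * 2 * TT2))) by ring.
    eapply Rle_trans; [apply Rabs_sum3|]. apply sum3_const_le; intros i Hi.
    eapply Rle_trans; [apply Rabs_sum3|]. apply sum3_const_le; intros j Hj.
    apply abs3_le; [apply PP_bd; auto | apply PP_bd; auto | apply TT_bd; lia]. }
  pose proof sum33_H_bd; pose proof TT2_nonneg; pose proof HA_nonneg.
  pose proof (Rabs_pos (sum3 (fun m => sum3 (fun n => Hh m n * sum3 (fun i => sum3 (fun j => PP m i * PP n j * TTA i j)))))).
  assert (sum3 (fun m => sum3 (fun n => Rabs (Hh m n))) * (36 * TT2) <= HA * (36 * TT2)) by nra.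
  nra. Qed.

Lemma trHP_bd : Rabs trHP <= 2 * HA.
Proof. unfold trHP. eapply Rle_trans; [apply Rabs_sum3|].
  eapply Rle_trans with (sum3 (fun m => sum3 (fun n => Rabs (Hh m n))) * 2).
  - rewrite sum3_mult_r.
    apply sum3_le; intros m Hm. eapply Rle_trans; [apply Rabs_sum3|].
    rewrite sum3_mult_r.
    apply sum3_le; intros n Hn. apply abs_mul_le; [lra | apply PP_bd; auto].
  - pose proof sum33_H_bd. lra. Qed.

Lemma T8_bd : Rabs (trHP * (TA 0 - ph / r) / 2) <= HA * (Ts + / r * Rabs ph).
Proof. replace (trHP * (TA 0 - ph / r) / 2) with (/2 * (trHP * (TA 0 - ph / r))) by (field; lra).
  rewrite Rabs_mult, Rabs_mult, (Rabs_pos_eq (/2)) by lra.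
  pose proof trHP_bd. pose proof absph.
  pose proof (Rabs_pos trHP). pose proof (Rabs_pos (TA 0 - ph / r)). pose proof HA_nonneg. nra. Qed.

Lemma abs8 a1 a2 a3 a4 a5 a6 a7 a8 :
  Rabs (a1 + a2 - a3 + a4 - a5 - a6 + a7 + a8) <=
  Rabs a1 + Rabs a2 + Rabs a3 + Rabs a4 + Rabs a5 + Rabs a6 + Rabs a7 + Rabs a8.
Proof. apply Rabs_le.
  pose proof (Rle_abs a1); pose proof (Rle_abs a2); pose proof (Rle_abs a3); pose proof (Rle_abs a4);
  pose proof (Rle_abs a5); pose proof (Rle_abs a6); pose proof (Rle_abs a7); pose proof (Rle_abs a8);
  pose proof (Rle_abs (-a1)); pose proof (Rle_abs (-a2)); pose proof (Rle_abs (-a3)); pose proof (Rle_abs (-a4));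
  pose proof (Rle_abs (-a5)); pose proof (Rle_abs (-a6)); pose proof (Rle_abs (-a7)); pose proof (Rle_abs (-a8));
  rewrite !Rabs_Ropp in *. lra. Qed.

Definition RHSA := r * Rabs (sum3 (fun i => TTA i i)) + HLT * (r * TPs + Ds) + HA * (r * TT2 + Ts + / r * Rabs ph).

Lemma YA_bd : S1 0 = 0 -> S2 0 = 0 -> (forall i, (1 <= i <= 3)%nat -> Rabs (S1 i) <= 1) -> (forall i, (1 <= i <= 3)%nat -> Rabs (S2 i) <= 1) ->
  (forall i j, (1 <= i <= 3)%nat -> (1 <= j <= 3)%nat -> PP i j = S1 i * S1 j + S2 i * S2 j) ->
  Rabs YA <= 60 * RHSA.
Proof. intros H10 H20 HS1 HS2 HP. unfold YA.
  replace (sum3 (fun i => sum3 (fun j => lowc Hh Lw (ev i) * PP i j * sum4 (fun a => Lbw a * TPA j a))))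
    with (sum3 (fun i => sum3 (fun j => lowc Hh Lw (ev i) * PP i j * Vj j))) by reflexivity.
  rewrite (T6_conv H10 H20 HP).
  eapply Rle_trans; [apply abs8|].
  pose proof T2_bd; pose proof T3_bd; pose proof T4_bd; pose proof T5_bd; pose proof (T6_bd HS1 HS2);
  pose proof T7_bd; pose proof T8_bd.
  rewrite Rabs_mult, absr.
  unfold RHSA. change (sum3 (fun i => TTA i i)) with (TTA 1 1 + TTA 2 2 + TTA 3 3).
  pose proof HA_nonneg; pose proof HLT_nonneg; pose proof TT2_nonneg; pose proof Ts_nonneg;
  pose proof TPs_nonneg; pose proof Ds_nonneg.
  assert (0 <= / r * Rabs ph) by (apply Rmult_le_pos; [left; apply Rinv_0_lt_compat; lra | apply Rabs_pos]).
  assert (0 <= HA * (r * TT2)) by (apply Rmult_le_pos; [|apply Rmult_le_pos]; lra).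
  assert (0 <= HA * (Ts + / r * Rabs ph)) by (apply Rmult_le_pos; lra).
  assert (0 <= HLT * Ds) by (apply Rmult_le_pos; lra).
  assert (0 <= HLT * (r * TPs)) by (apply Rmult_le_pos; [|apply Rmult_le_pos]; lra).
  assert (0 <= r * Rabs (TTA 1 1 + TTA 2 2 + TTA 3 3)) by (apply Rmult_le_pos; [lra|apply Rabs_pos]).
  lra. Qed.
End Bounds.

Lemma XA_bd : w 1 * w 1 + w 2 * w 2 + w 3 * w 3 = 1 -> 0 < r ->
  Rabs (/ 4 * lowc Hh Lbw Lw) < / 4 ->
  (forall a b, (a < 4)%nat -> (b < 4)%nat -> DD a b = DD b a) ->
  (forall a b, (a < 4)%nat -> (b < 4)%nat -> Hh a b = Hh b a) ->
  S1 0 = 0 -> S2 0 = 0 -> (forall i, (1 <= i <= 3)%nat -> Rabs (S1 i) <= 1) -> (forall i, (1 <= i <= 3)%nat -> Rabs (S2 i) <= 1) ->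
  (forall i j, (1 <= i <= 3)%nat -> (1 <= j <= 3)%nat -> PP i j = S1 i * S1 j + S2 i * S2 j) ->
  Rabs XA <= 120 * RHSA.
Proof. intros HW Hr Hq HDD HH H10 H20 HS1 HS2 HP.
  assert (Hw : forall i, (1 <= i <= 3)%nat -> Rabs (w i) <= 1).
  { intros i Hi. apply abs_le1.
    pose proof (Rle_0_sqr (w 1)); pose proof (Rle_0_sqr (w 2)); pose proof (Rle_0_sqr (w 3)).
    unfold Rsqr in *. destruct i as [|[|[|[|i]]]]; try lia; lra. }
  assert (Hg : gA < - / 4).
  { unfold gA. apply Rabs_def2 in Hq. lra. }
  assert (Hg0 : gA <> 0) by lra.
  pose proof (core_id HW ltac:(lra) Hg0 HDD HH) as E.
  pose proof (YA_bd Hw Hr H10 H20 HS1 HS2 HP) as B.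
  assert (XA = YA / (2 * gA)) by (rewrite <- E; field; lra).
  rewrite H. unfold Rdiv. rewrite Rabs_mult, Rabs_inv.
  rewrite (Rabs_left (2 * gA)) by lra.
  assert (0 < / (- (2 * gA)) <= 2).
  { split. apply Rinv_0_lt_compat; lra.
    replace 2 with (/ (/ 2)) at 2 by field. apply Rinv_le_contravar; lra. }
  pose proof (Rabs_pos YA). nra. Qed.

End Core.

Lemma compl3 (a1 a2 a3 b1 b2 b3 c1 c2 c3 : R) (H00 : (a1*a1 + a2*a2 + a3*a3) = 1) (H01 : (a1*b1 + a2*b2 + a3*b3) = 0) (H02 : (a1*c1 + a2*c2 + a3*c3) = 0) (H11 : (b1*b1 + b2*b2 + b3*b3) = 1) (H12 : (b1*c1 + b2*c2 + b3*c3) = 0) (H22 : (c1*c1 + c2*c2 + c3*c3) = 1) :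
  (a1*a1 + b1*b1 + c1*c1) = 1 /\ (a1*a2 + b1*b2 + c1*c2) = 0 /\ (a1*a3 + b1*b3 + c1*c3) = 0 /\ (a2*a2 + b2*b2 + c2*c2) = 1 /\ (a2*a3 + b2*b3 + c2*c3) = 0 /\ (a3*a3 + b3*b3 + c3*c3) = 1.
Proof.
  assert (Hd : (a1*(b2*c3 - b3*c2) - a2*(b1*c3 - b3*c1) + a3*(b1*c2 - b2*c1)) * (a1*(b2*c3 - b3*c2) - a2*(b1*c3 - b3*c1) + a3*(b1*c2 - b2*c1)) = ((a1*a1 + a2*a2 + a3*a3)*((b1*b1 + b2*b2 + b3*b3)*(c1*c1 + c2*c2 + c3*c3) - (b1*c1 + b2*c2 + b3*c3)*(b1*c1 + b2*c2 + b3*c3)) - (a1*b1 + a2*b2 + a3*b3)*((a1*b1 + a2*b2 + a3*b3)*(c1*c1 + c2*c2 + c3*c3) - (b1*c1 + b2*c2 + b3*c3)*(a1*c1 + a2*c2 + a3*c3)) + (a1*c1 + a2*c2 + a3*c3)*((a1*b1 + a2*b2 + a3*b3)*(b1*c1 + b2*c2 + b3*c3) - (b1*b1 + b2*b2 + b3*b3)*(a1*c1 + a2*c2 + a3*c3)))) by ring.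
  rewrite ?H00, ?H01, ?H02, ?H11, ?H12, ?H22 in Hd.
  assert (Hdet : (a1*(b2*c3 - b3*c2) - a2*(b1*c3 - b3*c1) + a3*(b1*c2 - b2*c1)) <> 0) by (intro Z; rewrite Z in Hd; lra).
  assert (N00 : ((a1*a1 + b1*b1 + c1*c1) - 1) * (a1*(b2*c3 - b3*c2) - a2*(b1*c3 - b3*c1) + a3*(b1*c2 - b2*c1)) = a1*((a1*a1 + a2*a2 + a3*a3) - 1)*((b2*c3 - c2*b3)) + b1*((a1*b1 + a2*b2 + a3*b3) - 0)*((b2*c3 - c2*b3)) + c1*((a1*c1 + a2*c2 + a3*c3) - 0)*((b2*c3 - c2*b3)) + a1*((a1*b1 + a2*b2 + a3*b3) - 0)*(-(a2*c3 - c2*a3)) + b1*((b1*b1 + b2*b2 + b3*b3) - 1)*(-(a2*c3 - c2*a3)) + c1*((b1*c1 + b2*c2 + b3*c3) - 0)*(-(a2*c3 - c2*a3)) + a1*((a1*c1 + a2*c2 + a3*c3) - 0)*((a2*b3 - b2*a3)) + b1*((b1*c1 + b2*c2 + b3*c3) - 0)*((a2*b3 - b2*a3)) + c1*((c1*c1 + c2*c2 + c3*c3) - 1)*((a2*b3 - b2*a3))) by ring.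
  assert (N01 : ((a1*a2 + b1*b2 + c1*c2) - 0) * (a1*(b2*c3 - b3*c2) - a2*(b1*c3 - b3*c1) + a3*(b1*c2 - b2*c1)) = a1*((a1*a1 + a2*a2 + a3*a3) - 1)*(-(b1*c3 - c1*b3)) + b1*((a1*b1 + a2*b2 + a3*b3) - 0)*(-(b1*c3 - c1*b3)) + c1*((a1*c1 + a2*c2 + a3*c3) - 0)*(-(b1*c3 - c1*b3)) + a1*((a1*b1 + a2*b2 + a3*b3) - 0)*((a1*c3 - c1*a3)) + b1*((b1*b1 + b2*b2 + b3*b3) - 1)*((a1*c3 - c1*a3)) + c1*((b1*c1 + b2*c2 + b3*c3) - 0)*((a1*c3 - c1*a3)) + a1*((a1*c1 + a2*c2 + a3*c3) - 0)*(-(a1*b3 - b1*a3)) + b1*((b1*c1 + b2*c2 + b3*c3) - 0)*(-(a1*b3 - b1*a3)) + c1*((c1*c1 + c2*c2 + c3*c3) - 1)*(-(a1*b3 - b1*a3))) by ring.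
  assert (N02 : ((a1*a3 + b1*b3 + c1*c3) - 0) * (a1*(b2*c3 - b3*c2) - a2*(b1*c3 - b3*c1) + a3*(b1*c2 - b2*c1)) = a1*((a1*a1 + a2*a2 + a3*a3) - 1)*((b1*c2 - c1*b2)) + b1*((a1*b1 + a2*b2 + a3*b3) - 0)*((b1*c2 - c1*b2)) + c1*((a1*c1 + a2*c2 + a3*c3) - 0)*((b1*c2 - c1*b2)) + a1*((a1*b1 + a2*b2 + a3*b3) - 0)*(-(a1*c2 - c1*a2)) + b1*((b1*b1 + b2*b2 + b3*b3) - 1)*(-(a1*c2 - c1*a2)) + c1*((b1*c1 + b2*c2 + b3*c3) - 0)*(-(a1*c2 - c1*a2)) + a1*((a1*c1 + a2*c2 + a3*c3) - 0)*((a1*b2 - b1*a2)) + b1*((b1*c1 + b2*c2 + b3*c3) - 0)*((a1*b2 - b1*a2)) + c1*((c1*c1 + c2*c2 + c3*c3) - 1)*((a1*b2 - b1*a2))) by ring.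
  assert (N11 : ((a2*a2 + b2*b2 + c2*c2) - 1) * (a1*(b2*c3 - b3*c2) - a2*(b1*c3 - b3*c1) + a3*(b1*c2 - b2*c1)) = a2*((a1*a1 + a2*a2 + a3*a3) - 1)*(-(b1*c3 - c1*b3)) + b2*((a1*b1 + a2*b2 + a3*b3) - 0)*(-(b1*c3 - c1*b3)) + c2*((a1*c1 + a2*c2 + a3*c3) - 0)*(-(b1*c3 - c1*b3)) + a2*((a1*b1 + a2*b2 + a3*b3) - 0)*((a1*c3 - c1*a3)) + b2*((b1*b1 + b2*b2 + b3*b3) - 1)*((a1*c3 - c1*a3)) + c2*((b1*c1 + b2*c2 + b3*c3) - 0)*((a1*c3 - c1*a3)) + a2*((a1*c1 + a2*c2 + a3*c3) - 0)*(-(a1*b3 - b1*a3)) + b2*((b1*c1 + b2*c2 + b3*c3) - 0)*(-(a1*b3 - b1*a3)) + c2*((c1*c1 + c2*c2 + c3*c3) - 1)*(-(a1*b3 - b1*a3))) by ring.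
  assert (N12 : ((a2*a3 + b2*b3 + c2*c3) - 0) * (a1*(b2*c3 - b3*c2) - a2*(b1*c3 - b3*c1) + a3*(b1*c2 - b2*c1)) = a2*((a1*a1 + a2*a2 + a3*a3) - 1)*((b1*c2 - c1*b2)) + b2*((a1*b1 + a2*b2 + a3*b3) - 0)*((b1*c2 - c1*b2)) + c2*((a1*c1 + a2*c2 + a3*c3) - 0)*((b1*c2 - c1*b2)) + a2*((a1*b1 + a2*b2 + a3*b3) - 0)*(-(a1*c2 - c1*a2)) + b2*((b1*b1 + b2*b2 + b3*b3) - 1)*(-(a1*c2 - c1*a2)) + c2*((b1*c1 + b2*c2 + b3*c3) - 0)*(-(a1*c2 - c1*a2)) + a2*((a1*c1 + a2*c2 + a3*c3) - 0)*((a1*b2 - b1*a2)) + b2*((b1*c1 + b2*c2 + b3*c3) - 0)*((a1*b2 - b1*a2)) + c2*((c1*c1 + c2*c2 + c3*c3) - 1)*((a1*b2 - b1*a2))) by ring.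
  assert (N22 : ((a3*a3 + b3*b3 + c3*c3) - 1) * (a1*(b2*c3 - b3*c2) - a2*(b1*c3 - b3*c1) + a3*(b1*c2 - b2*c1)) = a3*((a1*a1 + a2*a2 + a3*a3) - 1)*((b1*c2 - c1*b2)) + b3*((a1*b1 + a2*b2 + a3*b3) - 0)*((b1*c2 - c1*b2)) + c3*((a1*c1 + a2*c2 + a3*c3) - 0)*((b1*c2 - c1*b2)) + a3*((a1*b1 + a2*b2 + a3*b3) - 0)*(-(a1*c2 - c1*a2)) + b3*((b1*b1 + b2*b2 + b3*b3) - 1)*(-(a1*c2 - c1*a2)) + c3*((b1*c1 + b2*c2 + b3*c3) - 0)*(-(a1*c2 - c1*a2)) + a3*((a1*c1 + a2*c2 + a3*c3) - 0)*((a1*b2 - b1*a2)) + b3*((b1*c1 + b2*c2 + b3*c3) - 0)*((a1*b2 - b1*a2)) + c3*((c1*c1 + c2*c2 + c3*c3) - 1)*((a1*b2 - b1*a2))) by ring.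
  rewrite ?H00, ?H01, ?H02, ?H11, ?H12, ?H22 in *.
  repeat split; apply Rminus_diag_uniq.
  all: apply (Rmult_eq_reg_r (a1*(b2*c3 - b3*c2) - a2*(b1*c3 - b3*c1) + a3*(b1*c2 - b2*c1))); [rewrite Rmult_0_l | exact Hdet].
  all: first [rewrite N00|rewrite N01|rewrite N02|rewrite N11|rewrite N12|rewrite N22]; ring.
Qed.

Lemma ginv_sym (G Gi : nat -> nat -> R) : (forall a b, G a b = G b a) ->
  (forall a b, (a < 4)%nat -> (b < 4)%nat -> sum4 (fun mu => Gi a mu * G mu b) = if Nat.eqb a b then 1 else 0) ->
  forall a b, (a < 4)%nat -> (b < 4)%nat -> Gi a b = Gi b a.
Proof. intros Hs HI a b Ha Hb.
  assert (E1 : Gi b a = sum4 (fun c => sum4 (fun mu => Gi a mu * G mu c) * Gi b c)).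
  { unfold sum4 at 1. rewrite !HI by lia. destruct a as [|[|[|[|a]]]]; try lia; simpl; ring. }
  assert (E2 : sum4 (fun c => sum4 (fun mu => Gi a mu * G mu c) * Gi b c) =
               sum4 (fun mu => Gi a mu * sum4 (fun c => Gi b c * G c mu))).
  { unfold sum4. rewrite (Hs 1%nat 0%nat), (Hs 2%nat 0%nat), (Hs 3%nat 0%nat), (Hs 2%nat 1%nat),
      (Hs 3%nat 1%nat), (Hs 3%nat 2%nat). ring. }
  rewrite E1, E2. unfold sum4 at 1. rewrite !HI by lia.
  destruct b as [|[|[|[|b]]]]; try lia; simpl; ring. Qed.

Lemma mink_sym a b : mink a b = mink b a.
Proof. unfold mink. rewrite Nat.eqb_sym. destruct (Nat.eqb b a) eqn:E; auto.
  apply Nat.eqb_eq in E. subst. reflexivity. Qed.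

Lemma TT_eq phi p a b : C2 phi -> 0 < rad p -> (a < 4)%nat -> (b < 4)%nat ->
  tb a (tb b phi) p = TTA (om p) (rad p) (fun i => pd i phi p) (fun i j => pd i (pd j phi) p) a b.
Proof. intros HC Hr Ha Hb. destruct a as [|a].
  - change (tb 0 (tb b phi) p) with (pd 0 (tb b phi) p + sum3 (fun j => om p j * pd j (tb b phi) p)).
    unfold sum3. rewrite !pd_tb by (auto; lia). reflexivity.
  - change (tb (S a) (tb b phi) p) with (pd (S a) (tb b phi) p - om p (S a) * sum3 (fun j => om p j * pd j (tb b phi) p)).
    unfold sum3. rewrite !pd_tb by (auto; lia). reflexivity.
Qed.

Lemma om_norm p : 0 < rad p -> om p 1 * om p 1 + om p 2 * om p 2 + om p 3 * om p 3 = 1.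
Proof. intro Hr. unfold om.
  assert (E : rad p * rad p = coord p 1 * coord p 1 + coord p 2 * coord p 2 + coord p 3 * coord p 3).
  { unfold rad. rewrite sqrt_sqrt. unfold sum3; simpl; ring.
    unfold sum3. simpl. nra. }
  replace (coord p 1 / rad p * (coord p 1 / rad p) + coord p 2 / rad p * (coord p 2 / rad p) +
     coord p 3 / rad p * (coord p 3 / rad p)) with
    ((coord p 1 * coord p 1 + coord p 2 * coord p 2 + coord p 3 * coord p 3) / (rad p * rad p)) by (field; lra).
  rewrite <- E. field. lra. Qed.

Theorem corollary4p4 :
  exists C : R, 0 < C /\
  forall (g ginv : pt -> nat -> nat -> R) (phi F : pt -> R),
    (* g is a metric (symmetric) with inverse g^{αβ} = ginv *)
    (forall p a b, g p a b = g p b a) ->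
    (forall p a b, (a < 4)%nat -> (b < 4)%nat ->
       sum4 (fun mu => ginv p a mu * g p mu b) = if Nat.eqb a b then 1 else 0) ->
    (* |H^{L Lbar}| < 1/4, where H = ginv - m and H^{L Lbar} = 1/4 H_{Lbar L} *)
    (forall p, 0 < rad p ->
       Rabs (/4 * lowc (fun a b => ginv p a b - mink a b) (Lbv p) (Lv p)) < /4) ->
    C2 phi ->
    (* tilde Box_g phi = g^{αβ} ∂_α ∂_β phi = F *)
    (forall p, sum4 (fun a => sum4 (fun b => ginv p a b * pd a (pd b phi) p)) = F p) ->
    forall (p : pt) (S1 S2 : nat -> R),
      0 < rad p -> sphere_frame p S1 S2 ->
      let H := fun a b => ginv p a b - mink a b in
      let r := rad p in
      let L := Lv p in
      let Lb := Lbv p in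
      let gLLb := - / 2 + / 4 * lowc H Lb L in
      let trH := lowc H S1 S1 + lowc H S2 S2 in
      let rphi := fun x => rad x * phi x in
      let Delta_om := sum3 (fun i => tb i (tb i phi) p) in
      let abs_d := sum4 (fun a => Rabs (pd a phi p)) in
      let abs_tb := sum4 (fun a => Rabs (tb a phi p)) in
      let abs_tbd := sum4 (fun a => sum4 (fun b => Rabs (tb a (pd b phi) p))) in
      let abs_tb2 := sqrt (sum4 (fun a => sum4 (fun b => (tb a (tb b phi) p) ^ 2))) in
      let abs_HLT := Rabs (lowc H L L) + Rabs (lowc H L S1) + Rabs (lowc H L S2) in
      let abs_H := sum4 (fun a => sum4 (fun b => Rabs (H a b))) in
      Rabs (4 * ds (dq rphi) p
            - lowc H L L / (2 * gLLb) * dq (dq rphi) p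
            - (trH + lowc H L Lb) / (2 * gLLb * r) * dq rphi p
            + r * F p / (2 * gLLb))
      <= C * (r * Rabs Delta_om
              + abs_HLT * (r * abs_tbd + abs_d)
              + abs_H * (r * abs_tb2 + abs_tb + / r * Rabs (phi p))).
Proof.
  exists 120. split; [lra|].
  intros g ginv phi F Hgs Hinv HLL HC HF p S1 S2 Hr Hfr.
  cbv zeta.
  set (Hh := fun a b => ginv p a b - mink a b).
  set (w := om p). set (D := fun i => pd i phi p). set (DD := fun i j => pd i (pd j phi) p).
  destruct Hfr as [H10 [H20 [N1 [N2 [N12 [O1 O2]]]]]].
  assert (HW := om_norm p Hr).
  unfold sum3 in N1, N2, N12, O1, O2.
  destruct (compl3 (w 1%nat) (w 2%nat) (w 3%nat) (S1 1%nat) (S1 2%nat) (S1 3%nat) (S2 1%nat) (S2 2%nat) (S2 3%nat))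
    as [C11 [C12 [C13 [C22 [C23 C33]]]]]; try (unfold w; lra).
  assert (HP : forall i j, (1 <= i <= 3)%nat -> (1 <= j <= 3)%nat -> PP w i j = S1 i * S1 j + S2 i * S2 j).
  { intros i j Hi Hj. unfold PP, kd.
    destruct i as [|[|[|[|i]]]]; try lia; destruct j as [|[|[|[|j]]]]; try lia; simpl; lra. }
  assert (HS1 : forall i, (1 <= i <= 3)%nat -> Rabs (S1 i) <= 1).
  { intros i Hi. apply abs_le1. pose proof (Rle_0_sqr (S1 1%nat)); pose proof (Rle_0_sqr (S1 2%nat));
    pose proof (Rle_0_sqr (S1 3%nat)); unfold Rsqr in *. destruct i as [|[|[|[|i]]]]; try lia; lra. }
  assert (HS2 : forall i, (1 <= i <= 3)%nat -> Rabs (S2 i) <= 1).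
  { intros i Hi. apply abs_le1. pose proof (Rle_0_sqr (S2 1%nat)); pose proof (Rle_0_sqr (S2 2%nat));
    pose proof (Rle_0_sqr (S2 3%nat)); unfold Rsqr in *. destruct i as [|[|[|[|i]]]]; try lia; lra. }
  assert (HHs : forall a b, (a < 4)%nat -> (b < 4)%nat -> Hh a b = Hh b a).
  { intros a b Ha Hb. unfold Hh. rewrite (ginv_sym (g p) (ginv p) (Hgs p) (Hinv p) a b Ha Hb), mink_sym.
    reflexivity. }
  assert (HDs : forall a b, (a < 4)%nat -> (b < 4)%nat -> DD a b = DD b a).
  { intros a b Ha Hb. unfold DD. apply schwarz; auto. }
  assert (Hq : forall a, (a < 4)%nat -> pd a (dq (fun x => rad x * phi x)) p = DQF phi p a).
  { intros a Ha. apply ld_pd. apply ld_dq; auto. }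
  assert (Eds : ds (dq (fun x => rad x * phi x)) p = dsdqA w (rad p) (phi p) D DD).
  { unfold ds, dr, sum3. rewrite !Hq by lia. reflexivity. }
  assert (Edqdq : dq (dq (fun x => rad x * phi x)) p = dqdqA w (rad p) (phi p) D DD).
  { unfold dq at 1. unfold dr, sum3. rewrite !Hq by lia. reflexivity. }
  assert (Edq : dq (fun x => rad x * phi x) p = dqfA w (rad p) (phi p) D).
  { rewrite dq_rphi by auto. reflexivity. }
  assert (EF : F p = FA DD Hh).
  { rewrite <- HF. unfold FA, Hh, DD, sum4. ring. }
  assert (EtrH : lowc Hh S1 S1 + lowc Hh S2 S2 = trHP w Hh).
  { unfold trHP. unfold sum3. rewrite !HP by lia.
    unfold lowc, sum4, mink. simpl. rewrite H10, H20. ring. }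
  assert (EL : 4 * ds (dq (fun x => rad x * phi x)) p
            - lowc Hh (Lv p) (Lv p) / (2 * (- / 2 + / 4 * lowc Hh (Lbv p) (Lv p))) * dq (dq (fun x => rad x * phi x)) p
            - (lowc Hh S1 S1 + lowc Hh S2 S2 + lowc Hh (Lv p) (Lbv p)) / (2 * (- / 2 + / 4 * lowc Hh (Lbv p) (Lv p)) * rad p) * dq (fun x => rad x * phi x) p
            + rad p * F p / (2 * (- / 2 + / 4 * lowc Hh (Lbv p) (Lv p)))
            = XA w (rad p) (phi p) D DD Hh).
  { rewrite Eds, Edqdq, Edq, EF, EtrH. reflexivity. }
  rewrite EL.
  assert (ER : rad p * Rabs (sum3 (fun i => tb i (tb i phi) p))
              + (Rabs (lowc Hh (Lv p) (Lv p)) + Rabs (lowc Hh (Lv p) S1) + Rabs (lowc Hh (Lv p) S2)) *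
                (rad p * sum4 (fun a => sum4 (fun b => Rabs (tb a (pd b phi) p))) + sum4 (fun a => Rabs (pd a phi p)))
              + sum4 (fun a => sum4 (fun b => Rabs (Hh a b))) *
                (rad p * sqrt (sum4 (fun a => sum4 (fun b => (tb a (tb b phi) p) ^ 2)))
                 + sum4 (fun a => Rabs (tb a phi p)) + / rad p * Rabs (phi p))
              = RHSA w (rad p) (phi p) D DD Hh S1 S2).
  { unfold sum3 at 1. unfold sum4 at 4 5 6 7.
    rewrite !TT_eq by (auto; lia). reflexivity. }
  rewrite ER.
  apply XA_bd; auto.
  exact (HLL p Hr).
Qed.
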